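(* Let $\mathcal A\subset\mathbb R^d$ be finite and nonempty with $\mathcal D=\mathrm{conv}(\mathcal A)=\{x:Bx\le c\}$. Let $f(x)=g(Ax)+\langle b,x\rangle$ with $A\in\mathbb R^{m\times d}$, $b\in\mathbb R^d$, where $g$ is continuously differentiable on an open set containing $A\mathcal D$ and $\mu_g$-strongly convex on $A\mathcal D$ with $\mu_g>0$, and let $\tilde\mu$ be the constant $\tilde\mu:=1/\big(2\theta^2(\|b\|M+3GM_A+\frac{2}{\mu_g}(G^2+1))\big)$ defined in the context. Then $\tilde\mu_f\ge\tilde\mu\cdot\mathrm{PWidth}(\mathcal A)^2$.
   Context: Euclidean norms. $\mathcal X^*:=\arg\min_{\mathcal D}f$; $G:=\max_{x\in\mathcal D}\|\nabla g(Ax)\|$, $M:=\mathrm{diam}(\mathcal D)$, $M_A:=\mathrm{diam}(A\mathcal D)$; $\theta>0$ is a Hoffman constant: for every $t\in\mathbb R^m,s\in\mathbb R$ with $P_{t,s}:=\{y:Ay=t,\langle b,y\rangle=s,By\le c\}\ne\emptyset$ and every $x$ with $Bx\le c$, $d(x,P_{t,s})\le\theta\|(Ax-t,\langle b,x\rangle-s)\|$. For a finite $\mathcal B$ and $x\in\mathrm{conv}(\mathcal B)$, $\mathcal S_x(\mathcal B)$ is the family of subsets $S\subseteq\mathcal B$ such that $x$ is a proper convex combination of all elements of $S$ (all coefficients positive); $\mathcal S_x=\mathcal S_x(\mathcal A)$. For $r\neq0$, $\mathrm{PdirW}(\mathcal B,r,x):=\min_{S\in\mathcal S_x(\mathcal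 B)}\max_{s\in\mathcal B,v\in S}\langle r/\|r\|,s-v\rangle$; $\mathrm{PWidth}(\mathcal A):=\inf\{\mathrm{PdirW}(\mathcal K\cap\mathcal A,r,x)\}$ over nonempty faces $\mathcal K$ of $\mathcal D$ (including $\mathcal D$), $x\in\mathcal K$, $r\in\mathrm{cone}(\mathcal K-x)\setminus\{0\}$. For $x\in\mathcal D$: $s_f(x)\in\arg\min_{a\in\mathcal A}\langle\nabla f(x),a\rangle$; for $S\in\mathcal S_x$, $v_S(x)\in\arg\max_{v\in S}\langle\nabla f(x),v\rangle$; $v_f(x)$ is an element of $\{v_S(x):S\in\mathcal S_x\}$ minimizing $\langle\nabla f(x),\cdot\rangle$; for $\langle\nabla f(x),x^*-x\rangle<0$, $\gamma^{A}(x,x^* ):=\frac{\langle-\nabla f(x),x^*-x\rangle}{\langle-\nabla f(x),s_f(x)-v_f(x)\rangle}$. Generalized geometric strong convexity constant: $\tilde\mu_f:=\inf_{x\in\mathcal D\setminus\mathcal X^*}\ \sup_{x^*\in\mathcal X^*:\langle\nabla f(x),x^*-x\rangle<0}\frac{1}{2\gamma^{A}(x,x^* )^2}\big(f(x^* )-f(x)-2\langle\nabla f(x),x^*-x\rangle\big)$. *)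

(* Defs.v *)
(* classical reals. Vectors of R^k are functions nat -> R, of which
   only the components 0..k-1 are meaningful; matrices are nat -> nat -> R. *)
From Stdlib Require Import Reals.
Open Scope R_scope.

Definition Vec := nat -> R.
Definition Mat := nat -> nat -> R.

Fixpoint vsum (n : nat) (f : nat -> R) : R :=
  match n with O => 0 | S k => vsum k f + f k end.

Definition dot (n : nat) (u v : Vec) : R := vsum n (fun i => u i * v i).
Definition norm (n : nat) (v : Vec) : R := sqrt (dot n v v).
Definition vsub (u v : Vec) : Vec := fun i => u i - v i.
Definition vadd (u v : Vec) : Vec := fun i => u i + v i.
Definition vscale (t : R) (u : Vec) : Vec := fun i => t * u i.
Definition matvec (k : nat) (M : Mat) (x : Vec) : Vec :=
  fun i => vsum k (fun j => M i j * x j).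
Definition veq (k : nat) (u v : Vec) : Prop := forall i, (i < k)%nat -> u i = v i.

Definition is_max (P : R -> Prop) (w : R) : Prop := P w /\ forall y, P y -> y <= w.
Definition is_min (P : R -> Prop) (w : R) : Prop := P w /\ forall y, P y -> w <= y.
Definition is_glb (P : R -> Prop) (w : R) : Prop :=
  (forall y, P y -> w <= y) /\ (forall w', (forall y, P y -> w' <= y) -> w' <= w).
(* "sup P >= c" in the extended reals *)
Definition sup_ge (P : R -> Prop) (c : R) : Prop :=
  forall c', c' < c -> exists y, P y /\ c' < y.

(* The finite set A = {a 0, ..., a (n-1)} of R^d; subsets of A are index predicates. *)
Definition in_conv (d n : nat) (a : nat -> Vec) (x : Vec) : Prop :=
  exists lam : nat -> R,
    (forall i, (i < n)%nat -> 0 <= lam i) /\ vsum n lam = 1 /\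
    veq d x (fun k => vsum n (fun i => lam i * a i k)).

(* S \in S_x(Bs): S subset of Bs, x a proper convex combination of all elements of S *)
Definition in_Sx (d n : nat) (a : nat -> Vec) (Bs : nat -> Prop) (x : Vec)
  (S : nat -> Prop) : Prop :=
  (forall i, S i -> (i < n)%nat /\ Bs i) /\
  exists lam : nat -> R,
    (forall i, (i < n)%nat -> S i -> 0 < lam i) /\
    (forall i, (i < n)%nat -> ~ S i -> lam i = 0) /\
    vsum n lam = 1 /\
    veq d x (fun k => vsum n (fun i => lam i * a i k)).

Definition PdirW_is (d n : nat) (a : nat -> Vec) (Bs : nat -> Prop) (r x : Vec)
  (w : R) : Prop :=
  is_min (fun w' => exists S, in_Sx d n a Bs x S /\
            is_max (fun u => exists s v, (s < n)%nat /\ Bs s /\ S v /\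
                       u = dot d (vscale (/ norm d r) r) (vsub (a s) (a v))) w') w.

(* (exposed) faces of the polytope D; for polytopes all faces are exposed,
   and w = 0 gives D itself. *)
Definition is_face (d : nat) (inD : Vec -> Prop) (K : Vec -> Prop) : Prop :=
  exists w : Vec, forall x, K x <-> (inD x /\ forall y, inD y -> dot d w y <= dot d w x).

Definition in_cone (d : nat) (K : Vec -> Prop) (x r : Vec) : Prop :=
  exists (N : nat) (ts : nat -> R) (ys : nat -> Vec),
    (forall j, (j < N)%nat -> 0 <= ts j /\ K (ys j)) /\
    veq d r (fun k => vsum N (fun j => ts j * (ys j k - x k))).

(* the set whose infimum is PWidth(A) *)
Definition PWidth_set (d n : nat) (a : nat -> Vec) (w : R) : Prop :=
  exists K : Vec -> Prop,
    is_face d (in_conv d n a) K /\ (exists z, K z) /\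
    exists x r, K x /\ in_cone d K x r /\ ~ veq d r (fun _ => 0) /\
      PdirW_is d n a (fun i => (i < n)%nat /\ K (a i)) r x w.

Definition has_grad (k : nat) (h : Vec -> R) (gr y : Vec) : Prop :=
  forall eps, 0 < eps -> exists delta, 0 < delta /\
    forall z, norm k (vsub z y) < delta ->
      Rabs (h z - h y - dot k gr (vsub z y)) <= eps * norm k (vsub z y).

Definition is_open_in (k : nat) (U : Vec -> Prop) : Prop :=
  forall y, U y -> exists delta, 0 < delta /\
    forall z, norm k (vsub z y) < delta -> U z.

(* Main.v *)
Require Import Defs.
From Stdlib Require Import Reals ZArith Lra Lia Psatz Classical ClassicalEpsilon FunctionalExtensionality List.
Open Scope R_scope.

Lemma vsum_ext : forall n f g, (forall i, (i < n)%nat -> f i = g i) -> vsum n f = vsum n g.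
Proof. induction n; intros; simpl; auto. rewrite (IHn f g); [rewrite H|]; auto; intros; apply H; lia. Qed.

Lemma vsum_plus : forall n f g, vsum n (fun i => f i + g i) = vsum n f + vsum n g.
Proof. induction n; intros; simpl; [lra|]. rewrite IHn; lra. Qed.

Lemma vsum_minus : forall n f g, vsum n (fun i => f i - g i) = vsum n f - vsum n g.
Proof. induction n; intros; simpl; [lra|]. rewrite IHn; lra. Qed.

Lemma vsum_scal : forall n c f, vsum n (fun i => c * f i) = c * vsum n f.
Proof. induction n; intros; simpl; [lra|]. rewrite IHn; lra. Qed.

Lemma vsum_scalr : forall n c f, vsum n (fun i => f i * c) = vsum n f * c.
Proof. induction n; intros; simpl; [lra|]. rewrite IHn; lra. Qed.

Lemma vsum_zero : forall n f, (forall i, (i < n)%nat -> f i = 0) -> vsum n f = 0.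
Proof. induction n; intros; simpl; auto. rewrite IHn, H; try lra; try lia. intros; apply H; lia. Qed.

Lemma vsum_le : forall n f g, (forall i, (i < n)%nat -> f i <= g i) -> vsum n f <= vsum n g.
Proof. induction n; intros; simpl; [lra|]. assert (f n <= g n) by (apply H; lia).
 assert (vsum n f <= vsum n g) by (apply IHn; intros; apply H; lia). lra. Qed.

Lemma vsum_nonneg : forall n f, (forall i, (i < n)%nat -> 0 <= f i) -> 0 <= vsum n f.
Proof. intros. rewrite <- (vsum_zero n (fun _ => 0)) by auto. apply vsum_le; auto. Qed.

Lemma vsum_swap : forall n k (F : nat -> nat -> R),
  vsum n (fun i => vsum k (fun j => F i j)) = vsum k (fun j => vsum n (fun i => F i j)).
Proof. induction n; intros; simpl. rewrite vsum_zero; auto. rewrite IHn, <- vsum_plus. auto. Qed.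

Lemma vsum_term_le : forall n f i, (forall j, (j < n)%nat -> 0 <= f j) -> (i < n)%nat -> f i <= vsum n f.
Proof. induction n; intros; [lia|]. simpl. destruct (Nat.eq_dec i n).
 subst. assert (0 <= vsum n f) by (apply vsum_nonneg; intros; apply H; lia). lra.
 assert (f i <= vsum n f) by (apply IHn; intros; [apply H; lia| lia]). assert (0 <= f n) by (apply H; lia). lra. Qed.

Lemma vsum_nonpos_zero : forall n f i, (forall j, (j < n)%nat -> f j <= 0) -> vsum n f = 0 -> (i < n)%nat -> f i = 0.
Proof. intros. assert (- f i <= vsum n (fun j => - f j)) by (apply (vsum_term_le n (fun j => - f j)); auto; intros; specialize (H j H2); lra).
 replace (vsum n (fun j => - f j)) with (- vsum n f) in H2. specialize (H i H1). lra.
 rewrite <- (Rmult_1_l (vsum n f)), Ropp_mult_distr_l, <- vsum_scal. apply vsum_ext; intros; lra. Qed.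

Lemma vsum_abs : forall n f, Rabs (vsum n f) <= vsum n (fun i => Rabs (f i)).
Proof. induction n; intros; simpl. rewrite Rabs_R0; lra. eapply Rle_trans. apply Rabs_triang. specialize (IHn f). lra. Qed.

Lemma dot_sym : forall k u v, dot k u v = dot k v u.
Proof. intros; unfold dot; apply vsum_ext; intros; lra. Qed.
Lemma dot_sub_l : forall k u v w, dot k (vsub u v) w = dot k u w - dot k v w.
Proof. intros; unfold dot, vsub. rewrite <- vsum_minus; apply vsum_ext; intros; lra. Qed.
Lemma dot_sub_r : forall k u v w, dot k w (vsub u v) = dot k w u - dot k w v.
Proof. intros; unfold dot, vsub. rewrite <- vsum_minus; apply vsum_ext; intros; lra. Qed.
Lemma dot_add_l : forall k u v w, dot k (vadd u v) w = dot k u w + dot k v w.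
Proof. intros; unfold dot, vadd. rewrite <- vsum_plus; apply vsum_ext; intros; lra. Qed.
Lemma dot_add_r : forall k u v w, dot k w (vadd u v) = dot k w u + dot k w v.
Proof. intros; unfold dot, vadd. rewrite <- vsum_plus; apply vsum_ext; intros; lra. Qed.
Lemma dot_scale_l : forall k t u w, dot k (vscale t u) w = t * dot k u w.
Proof. intros; unfold dot, vscale. rewrite <- vsum_scal; apply vsum_ext; intros; lra. Qed.
Lemma dot_scale_r : forall k t u w, dot k w (vscale t u) = t * dot k w u.
Proof. intros; unfold dot, vscale. rewrite <- vsum_scal; apply vsum_ext; intros; lra. Qed.
Lemma dot_pos : forall k u, 0 <= dot k u u.
Proof. intros; unfold dot; apply vsum_nonneg; intros; nra. Qed.
Lemma dot_veq_l : forall k u u' w, veq k u u' -> dot k u w = dot k u' w.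
Proof. intros; unfold dot; apply vsum_ext; intros; rewrite H; auto. Qed.
Lemma dot_veq_r : forall k u u' w, veq k u u' -> dot k w u = dot k w u'.
Proof. intros; unfold dot; apply vsum_ext; intros; rewrite H; auto. Qed.

Lemma norm_pos : forall k u, 0 <= norm k u.
Proof. intros; apply sqrt_pos. Qed.
Lemma norm_sq : forall k u, norm k u * norm k u = dot k u u.
Proof. intros; unfold norm; apply sqrt_sqrt, dot_pos. Qed.
Lemma norm_sq2 : forall k u, norm k u ^ 2 = dot k u u.
Proof. intros; rewrite <- norm_sq; ring. Qed.

Lemma quad_disc : forall a b c, (forall t, 0 <= a + 2*b*t + c*t*t) -> b*b <= a*c.
Proof. intros. assert (0 <= a) by (specialize (H 0); lra).
 destruct (Req_dec c 0). subst. destruct (Req_dec b 0). subst; lra.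
 specialize (H (-(a+1)/(2*b))). assert (2*b*(-(a+1)/(2*b)) = -(a+1)) by (field; auto). lra.
 assert (0 <= c). { destruct (Rle_lt_dec 0 c); auto. exfalso.
   set (K := (2*Rabs b + a + 1)/(-c) + 1). specialize (H K).
   assert (HK : c*K = -(2*Rabs b + a + 1) + c) by (unfold K; field; lra).
   pose proof (Rabs_pos b). assert (1 <= K). { unfold K. assert (0 <= (2*Rabs b + a + 1)/(-c)).
     apply Rmult_le_pos; [lra| left; apply Rinv_0_lt_compat; lra]. lra. }
   assert (2*b*K <= 2*Rabs b*K) by (pose proof (Rle_abs b); nra).
   assert (c*K*K = (-(2*Rabs b + a + 1) + c)*K) by (rewrite HK; ring). nra. }
 specialize (H (-b/c)). assert (2*b*(-b/c) + c*(-b/c)*(-b/c) = -(b*b/c)) by (field; lra).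
 assert (b*b = (b*b/c)*c) by (field; lra). nra. Qed.

Lemma cauchy_schwarz : forall k u v, Rabs (dot k u v) <= norm k u * norm k v.
Proof. intros. assert (dot k u v * dot k u v <= dot k u u * dot k v v).
 { apply quad_disc. intro t. pose proof (dot_pos k (vadd u (vscale t v))).
   rewrite dot_add_l, !dot_add_r, !dot_scale_l, !dot_scale_r, (dot_sym k v u) in H. lra. }
 rewrite <- !norm_sq in H. pose proof (norm_pos k u). pose proof (norm_pos k v).
 assert (Rabs (dot k u v) * Rabs (dot k u v) = dot k u v * dot k u v) by (rewrite <- Rabs_mult; apply Rabs_right; pose proof (Rle_0_sqr (dot k u v)); unfold Rsqr in *; lra).
 pose proof (Rabs_pos (dot k u v)). set (P := norm k u * norm k v) in *.
 assert (0 <= P) by (unfold P; nra). destruct (Rle_lt_dec (Rabs (dot k u v)) P); auto.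
 assert (P * P < Rabs (dot k u v) * Rabs (dot k u v)) by (apply Rmult_le_0_lt_compat; lra).
 unfold P in H5. lra. Qed.

Lemma dot_le_norm : forall k u v, dot k u v <= norm k u * norm k v.
Proof. intros. pose proof (cauchy_schwarz k u v). pose proof (Rle_abs (dot k u v)). lra. Qed.


Lemma abs_le_inv : forall a b, Rabs a <= b -> -b <= a <= b.
Proof. intros. pose proof (Rle_abs a). pose proof (Rle_abs (-a)). rewrite Rabs_Ropp in H1. lra. Qed.

Lemma inv_small : forall eps, 0 < eps -> exists K, forall k, (k >= K)%nat -> / (INR k + 1) < eps.
Proof. intros. destruct (archimed_cor1 eps H) as [N [HN HN0]]. exists N. intros.
 assert (0 < INR N) by (apply lt_0_INR; lia). assert (INR N <= INR k) by (apply le_INR; lia).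
 assert (/ (INR k + 1) <= / INR N) by (apply Rinv_le_contravar; lra). lra. Qed.

Lemma cv_const : forall c, Un_cv (fun _ => c) c.
Proof. intros c eps He; exists 0%nat; intros; unfold Rdist; rewrite Rminus_diag, Rabs_R0; lra. Qed.

Lemma cv_vsum : forall N (F : nat -> nat -> R) (L : nat -> R),
  (forall i, (i < N)%nat -> Un_cv (fun k => F k i) (L i)) -> Un_cv (fun k => vsum N (F k)) (vsum N L).
Proof. induction N; intros; simpl. apply cv_const. apply CV_plus. apply IHN; intros; apply H; lia. apply H; lia. Qed.

Lemma cv_le_ev : forall u l c K, (forall k, (k >= K)%nat -> u k <= c) -> Un_cv u l -> l <= c.
Proof. intros. destruct (Rle_lt_dec l c); auto. destruct (H0 (l - c)) as [N HN]; [lra|].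
 specialize (HN (max N K) ltac:(lia)). specialize (H (max N K) ltac:(lia)). unfold Rdist in HN.
 pose proof (Rle_abs (l - u (max N K))). rewrite Rabs_minus_sym in HN. lra. Qed.

Lemma cv_ge_ev : forall u l c K, (forall k, (k >= K)%nat -> c <= u k) -> Un_cv u l -> c <= l.
Proof. intros. assert (-l <= -c). apply (cv_le_ev (fun k => - u k) (-l) (-c) K). intros; specialize (H k H1); lra.
 apply CV_opp in H0. auto. lra. Qed.

Lemma cv_ext_ev : forall u v l K, (forall k, (k >= K)%nat -> u k = v k) -> Un_cv u l -> Un_cv v l.
Proof. intros. intros eps He. destruct (H0 eps He) as [N HN]. exists (max N K). intros.
 rewrite <- H by lia. apply HN; lia. Qed.

Definition incr (phi : nat -> nat) := forall k, (phi k < phi (S k))%nat.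
Lemma incr_ge : forall phi, incr phi -> forall k, (k <= phi k)%nat.
Proof. intros phi H; induction k; [lia|]. specialize (H k); lia. Qed.
Lemma incr_mono : forall phi, incr phi -> forall k l, (k <= l)%nat -> (phi k <= phi l)%nat.
Proof. intros phi H k l; induction 1; auto. specialize (H m); lia. Qed.
Lemma incr_comp : forall phi psi, incr phi -> incr psi -> incr (fun k => phi (psi k)).
Proof. intros phi psi H1 H2 k. specialize (H2 k). assert (S (psi k) <= psi (S k))%nat by lia.
 apply (incr_mono phi H1) in H. specialize (H1 (psi k)). lia. Qed.

Lemma cv_subseq : forall u l phi, incr phi -> Un_cv u l -> Un_cv (fun k => u (phi k)) l.
Proof. intros. intros eps He. destruct (H0 eps He) as [N HN]. exists N. intros.
 apply HN. pose proof (incr_ge phi H n). lia. Qed.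

Fixpoint phi_rec (pick : nat -> nat -> nat) (k : nat) : nat :=
  match k with O => pick O O | S k' => pick (S (phi_rec pick k')) (S k') end.

Lemma bw1 : forall (u : nat -> R) Bd, (forall k, Rabs (u k) <= Bd) ->
  exists phi, incr phi /\ exists l, Un_cv (fun k => u (phi k)) l.
Proof. intros. destruct (Bolzano_Weierstrass u (fun c => -Bd <= c <= Bd) (compact_P3 _ _)) as [l Hl].
 { intros k; specialize (H k). apply abs_le_inv in H. lra. }
 assert (Hp : forall N k, exists p, (N <= p)%nat /\ Rabs (u p - l) < / (INR k + 1)).
 { intros. assert (Hpos : 0 < / (INR k + 1)) by (apply Rinv_0_lt_compat; pose proof (pos_INR k); lra).
   destruct (Hl (disc l (mkposreal _ Hpos)) N) as [p [Hp1 Hp2]].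
   exists (mkposreal _ Hpos). intros y Hy; auto. exists p; split; auto. }
 set (pick := fun N k => proj1_sig (constructive_indefinite_description _ (Hp N k))).
 assert (Hpick : forall N k, (N <= pick N k)%nat /\ Rabs (u (pick N k) - l) < / (INR k + 1)).
 { intros; unfold pick. destruct (constructive_indefinite_description _ _); simpl; auto. }
 exists (phi_rec pick). split. intro k. simpl. destruct (Hpick (S (phi_rec pick k)) (S k)). lia.
 exists l. intros eps He. destruct (inv_small eps He) as [K HK]. exists K. intros. unfold Rdist.
 assert (Rabs (u (phi_rec pick n) - l) < / (INR n + 1)) by (destruct n; simpl; apply Hpick).
 specialize (HK n H0). lra. Qed.

Lemma bwN : forall N (X : nat -> Vec) Bd, (forall k i, (i < N)%nat -> Rabs (X k i) <= Bd) ->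
  exists phi, incr phi /\ exists y : Vec, forall i, (i < N)%nat -> Un_cv (fun k => X (phi k) i) (y i).
Proof. induction N; intros.
 - exists (fun k => k). split. intro; lia. exists (fun _ => 0). intros; lia.
 - destruct (IHN X Bd) as [phi1 [Hphi1 [y Hy]]]. intros; apply H; lia.
   destruct (bw1 (fun k => X (phi1 k) N) Bd) as [phi2 [Hphi2 [l Hl]]]. intros; apply H; lia.
   exists (fun k => phi1 (phi2 k)). split. apply incr_comp; auto.
   exists (fun i => if Nat.eq_dec i N then l else y i). intros.
   destruct (Nat.eq_dec i N). subst; auto.
   apply (cv_subseq (fun k => X (phi1 k) i)); auto. apply Hy; lia. Qed.

Lemma compact_min : forall N (C : Vec -> Prop) (h : Vec -> R) Bd,
  (forall z, C z -> forall i, (i < N)%nat -> Rabs (z i) <= Bd) ->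
  (forall (X : nat -> Vec) y, (forall k, C (X k)) -> (forall i, (i < N)%nat -> Un_cv (fun k => X k i) (y i)) ->
     C y /\ Un_cv (fun k => h (X k)) (h y)) ->
  (exists z, C z) -> exists y, C y /\ forall z, C z -> h y <= h z.
Proof. intros N C h Bd HB Hcl [z0 Hz0].
 assert (Hlb : exists mB, forall z, C z -> mB <= h z).
 { apply NNPP; intro Hn. assert (Hk : forall k, exists z, C z /\ h z < - INR k).
   { intros k. apply NNPP; intro H2. apply Hn. exists (- INR k). intros z Hz.
     destruct (Rle_lt_dec (- INR k) (h z)); auto. exfalso; apply H2; eauto. }
   set (X := fun k => proj1_sig (constructive_indefinite_description _ (Hk k))).
   assert (HX : forall k, C (X k) /\ h (X k) < - INR k) by (intros; unfold X; destruct (constructive_indefinite_description _ _); auto).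
   destruct (bwN N X Bd) as [phi [Hphi [y Hy]]]. intros; apply (HB (X k)); auto; apply HX.
   destruct (Hcl (fun k => X (phi k)) y) as [Cy Hh]; auto. intros; apply HX.
   destruct (Hh 1) as [K HK]; [lra|]. destruct (archimed (Rabs (h y) + 1)) as [Hu _].
   set (K' := max K (Z.to_nat (up (Rabs (h y) + 1)))).
   specialize (HK K' ltac:(unfold K'; lia)). unfold Rdist in HK. destruct (HX (phi K')).
   assert (INR (Z.to_nat (up (Rabs (h y) + 1))) <= INR (phi K')).
   { apply le_INR. pose proof (incr_ge phi Hphi K'). unfold K' in *. lia. }
   rewrite INR_IZR_INZ in H1. rewrite Z2Nat.id in H1.
   pose proof (Rle_abs (h y)). pose proof (Rle_abs (h (X (phi K')) - h y)). pose proof (Rle_abs (-(h (X (phi K')) - h y))). rewrite Rabs_Ropp in H4. pose proof (Rle_abs (- h y)). rewrite Rabs_Ropp in H5. lra.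
   apply le_IZR. pose proof (Rabs_pos (h y)). lra. }
 destruct Hlb as [mB HmB].
 destruct (completeness (fun r => exists z, C z /\ r = - h z)) as [l [Hl1 Hl2]].
 { exists (- mB). intros r [z [Hz ->]]. specialize (HmB z Hz). lra. }
 { exists (- h z0); eauto. }
 assert (Hk : forall k, exists z, C z /\ h z < - l + / (INR k + 1)).
 { intros k. apply NNPP; intro H2. assert (Hpos : 0 < / (INR k + 1)) by (apply Rinv_0_lt_compat; pose proof (pos_INR k); lra).
   assert (l <= l - / (INR k + 1)). { apply Hl2. intros r [z [Hz ->]].
     destruct (Rle_lt_dec (- h z) (l - / (INR k + 1))); auto. exfalso; apply H2. exists z; split; auto; lra. }
   lra. }
 set (X := fun k => proj1_sig (constructive_indefinite_description _ (Hk k))).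
 assert (HX : forall k, C (X k) /\ h (X k) < - l + / (INR k + 1)) by (intros; unfold X; destruct (constructive_indefinite_description _ _); auto).
 destruct (bwN N X Bd) as [phi [Hphi [y Hy]]]. intros; apply (HB (X k)); auto; apply HX.
 destruct (Hcl (fun k => X (phi k)) y) as [Cy Hh]; auto. intros; apply HX.
 exists y; split; auto. intros z Hz.
 assert (- h z <= l) by (apply Hl1; eauto).
 assert (forall e, 0 < e -> h y <= - l + e).
 { intros e He. destruct (inv_small e He) as [K HK]. apply (cv_le_ev (fun k => h (X (phi k))) _ _ K); [|exact Hh]. intros.
   destruct (HX (phi k)). pose proof (incr_ge phi Hphi k). specialize (HK (phi k) ltac:(lia)). lra. }
 destruct (Rle_lt_dec (h y) (- l)). lra. specialize (H0 ((h y + l)/2) ltac:(lra)). lra. Qed.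

Lemma norm_veq : forall k u u', veq k u u' -> norm k u = norm k u'.
Proof. intros; unfold norm; rewrite (dot_veq_l k u u' u), (dot_veq_r k u u' u'); auto. Qed.

Lemma norm_scale : forall k t u, norm k (vscale t u) = Rabs t * norm k u.
Proof. intros. unfold norm. rewrite dot_scale_l, dot_scale_r, <- Rmult_assoc.
 rewrite sqrt_mult_alt by (pose proof (Rle_0_sqr t); unfold Rsqr in *; lra).
 f_equal. rewrite <- sqrt_Rsqr_abs. auto. Qed.

Lemma comp_le_norm : forall k u i, (i < k)%nat -> Rabs (u i) <= norm k u.
Proof. intros. rewrite <- sqrt_Rsqr_abs. apply sqrt_le_1_alt. unfold Rsqr, dot.
 apply (vsum_term_le k (fun i => u i * u i)); auto. intros; nra. Qed.

Lemma norm_le_sumabs : forall k u, norm k u <= vsum k (fun i => Rabs (u i)).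
Proof. intros. assert (dot k u u <= vsum k (fun i => Rabs (u i)) * vsum k (fun i => Rabs (u i))).
 { induction k; unfold dot in *; simpl. lra.
   assert (0 <= vsum k (fun i => Rabs (u i))) by (apply vsum_nonneg; intros; apply Rabs_pos).
   assert (u k * u k = Rabs (u k) * Rabs (u k)) by (rewrite <- Rabs_mult; rewrite Rabs_right; [auto| pose proof (Rle_0_sqr (u k)); unfold Rsqr in *; lra]).
   pose proof (Rabs_pos (u k)). nra. }
 unfold norm. rewrite <- (sqrt_square (vsum k (fun i => Rabs (u i)))) by (apply vsum_nonneg; intros; apply Rabs_pos).
 apply sqrt_le_1_alt; auto. Qed.

Lemma norm_pos_neq : forall k u, ~ veq k u (fun _ => 0) -> 0 < norm k u.
Proof. intros. destruct (Rle_lt_dec (norm k u) 0); auto. exfalso. apply H. intros i Hi.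
 pose proof (comp_le_norm k u i Hi). pose proof (norm_pos k u). pose proof (Rabs_pos (u i)).
 assert (Rabs (u i) = 0) by lra. destruct (Req_dec (u i) 0); auto. apply Rabs_no_R0 in H4; lra. Qed.

Lemma matvec_add : forall k M u v, matvec k M (vadd u v) = vadd (matvec k M u) (matvec k M v).
Proof. intros; unfold matvec, vadd; apply functional_extensionality; intro i. rewrite <- vsum_plus; apply vsum_ext; intros; lra. Qed.
Lemma matvec_sub : forall k M u v, matvec k M (vsub u v) = vsub (matvec k M u) (matvec k M v).
Proof. intros; unfold matvec, vsub; apply functional_extensionality; intro i. rewrite <- vsum_minus; apply vsum_ext; intros; lra. Qed.
Lemma matvec_scale : forall k M t u, matvec k M (vscale t u) = vscale t (matvec k M u).
Proof. intros; unfold matvec, vscale; apply functional_extensionality; intro i. rewrite <- vsum_scal; apply vsum_ext; intros; lra. Qed.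
Lemma matvec_veq : forall k M u v, veq k u v -> matvec k M u = matvec k M v.
Proof. intros; unfold matvec; apply functional_extensionality; intro i. apply vsum_ext; intros; rewrite H; auto. Qed.

Definition comb (n : nat) (a : nat -> Vec) (lam : nat -> R) : Vec := fun k => vsum n (fun i => lam i * a i k).

Lemma dot_comb : forall d n a lam w, dot d w (comb n a lam) = vsum n (fun i => lam i * dot d w (a i)).
Proof. intros. unfold dot, comb. 
 transitivity (vsum d (fun j => vsum n (fun i => lam i * (w j * a i j)))).
 apply vsum_ext; intros. rewrite <- vsum_scal. apply vsum_ext; intros; ring.
 rewrite <- vsum_swap. apply vsum_ext; intros. rewrite <- vsum_scal. auto. Qed.

Lemma conv_dot : forall d n a x w, in_conv d n a x -> exists lam,
  (forall i, (i < n)%nat -> 0 <= lam i) /\ vsum n lam = 1 /\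
  dot d w x = vsum n (fun i => lam i * dot d w (a i)).
Proof. intros d n a x w [lam [H1 [H2 H3]]]. exists lam; repeat split; auto.
 rewrite (dot_veq_r d x (comb n a lam)); auto. apply dot_comb. Qed.

Lemma conv_le : forall d n a x w c, in_conv d n a x -> (forall i, (i < n)%nat -> dot d w (a i) <= c) -> dot d w x <= c.
Proof. intros. destruct (conv_dot d n a x w H) as [lam [H1 [H2 H3]]]. rewrite H3.
 replace c with (vsum n (fun i => lam i * c)). apply vsum_le; intros. specialize (H1 i H4); specialize (H0 i H4); nra.
 rewrite vsum_scalr, H2; ring. Qed.

Lemma conv_ge : forall d n a x w c, in_conv d n a x -> (forall i, (i < n)%nat -> c <= dot d w (a i)) -> c <= dot d w x.
Proof. intros. destruct (conv_dot d n a x w H) as [lam [H1 [H2 H3]]]. rewrite H3.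
 replace c with (vsum n (fun i => lam i * c)) at 1. apply vsum_le; intros. specialize (H1 i H4); specialize (H0 i H4); nra.
 rewrite vsum_scalr, H2; ring. Qed.

Lemma conv_convex : forall d n a x y t, in_conv d n a x -> in_conv d n a y -> 0 <= t <= 1 ->
  in_conv d n a (vadd (vscale t x) (vscale (1 - t) y)).
Proof. intros d n a x y t [l1 [H1 [H2 H3]]] [l2 [H4 [H5 H6]]] Ht.
 exists (fun i => t * l1 i + (1 - t) * l2 i). split; [intros; specialize (H1 i H); specialize (H4 i H); nra|].
 split. rewrite vsum_plus, !vsum_scal, H2, H5; ring.
 intros k Hk. unfold vadd, vscale. rewrite H3, H6 by auto. rewrite <- !vsum_scal, <- vsum_plus. apply vsum_ext; intros; ring. Qed.

Lemma conv_vertex : forall d n a i, (i < n)%nat -> in_conv d n a (a i).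
Proof. intros. exists (fun j => if Nat.eq_dec j i then 1 else 0). split. intros; destruct (Nat.eq_dec i0 i); lra.
 assert (forall (F : nat -> R) N, (i < N)%nat -> vsum N (fun j => (if Nat.eq_dec j i then 1 else 0) * F j) = F i).
 { intros F. induction N; intros; [lia|]. simpl. destruct (Nat.eq_dec N i). subst. rewrite vsum_zero. ring.
   intros; destruct (Nat.eq_dec i0 i); [lia|]; ring. rewrite IHN by lia. ring. }
 split. transitivity (vsum n (fun j => (if Nat.eq_dec j i then 1 else 0) * 1)). apply vsum_ext; intros; ring. apply (H0 (fun _ => 1) n H).
 intros k Hk. rewrite (H0 (fun j => a j k) n H). auto. Qed.

Lemma conv_veq : forall d n a x y, veq d x y -> in_conv d n a x -> in_conv d n a y.
Proof. intros d n a x y Hv [l [H1 [H2 H3]]]. exists l; repeat split; auto. intros k Hk. rewrite <- Hv by auto; auto. Qed.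

Lemma vsub_vadd_scale : forall y t w, vsub (vadd y (vscale t w)) y = vscale t w.
Proof. intros; apply functional_extensionality; intro i; unfold vsub, vadd, vscale; ring. Qed.

Lemma grad_ub : forall k h gr y w c K, has_grad k h gr y ->
  (forall t, 0 < t <= 1 -> h (vadd y (vscale t w)) - h y <= t * c + t * t * K) -> dot k gr w <= c.
Proof. intros. destruct (Rle_lt_dec (dot k gr w) c); auto. exfalso.
 set (gap := dot k gr w - c). set (nw := norm k w). pose proof (norm_pos k w) as Hnw. fold nw in Hnw.
 destruct (H (gap / (4 * (nw + 1)))) as [dl [Hdl Hd]]. apply Rdiv_lt_0_compat; unfold gap; lra.
 pose proof (Rabs_pos K).
 set (t := Rmin 1 (Rmin (dl / (2 * (nw + 1))) (gap / (4 * (Rabs K + 1))))).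
 assert (Ht1 : 0 < t). { unfold t. apply Rmin_pos. lra. apply Rmin_pos; apply Rdiv_lt_0_compat; unfold gap; lra. }
 assert (Ht2 : t <= 1) by apply Rmin_l.
 assert (Ht3 : t <= dl / (2 * (nw + 1))) by (unfold t; eapply Rle_trans; [apply Rmin_r| apply Rmin_l]).
 assert (Ht4 : t <= gap / (4 * (Rabs K + 1))) by (unfold t; eapply Rle_trans; [apply Rmin_r| apply Rmin_r]).
 assert (Hn : norm k (vsub (vadd y (vscale t w)) y) = t * nw).
 { rewrite vsub_vadd_scale, norm_scale, Rabs_right; auto; lra. }
 assert (t * nw < dl). { apply Rmult_le_compat_r with (r := nw + 1) in Ht3; [|lra].
   assert (dl / (2 * (nw + 1)) * (nw + 1) = dl / 2) by (field; lra). nra. }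
 specialize (Hd (vadd y (vscale t w))). rewrite Hn in Hd. specialize (Hd H2).
 rewrite vsub_vadd_scale, dot_scale_r in Hd. apply abs_le_inv in Hd.
 specialize (H0 t (conj Ht1 Ht2)).
 assert (gap / (4 * (nw + 1)) * (t * nw) <= t * (gap / 4)).
 { assert (gap / (4 * (nw + 1)) * (t * nw) = t * (gap / 4) * (nw / (nw + 1))) by (field; lra).
   assert (nw / (nw + 1) <= 1). { apply Rmult_le_reg_r with (nw + 1); [lra|].
     assert (nw / (nw + 1) * (nw + 1) = nw) by (field; lra). lra. }
   assert (0 <= t * (gap / 4)) by (unfold gap; nra). nra. }
 assert (t * K <= gap / 4). { apply Rmult_le_compat_r with (r := Rabs K + 1) in Ht4; [|lra].
   assert (gap / (4 * (Rabs K + 1)) * (Rabs K + 1) = gap / 4) by (field; lra).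
   pose proof (Rle_abs K). nra. }
 assert (t * t * K <= t * (gap / 4)) by nra. assert (0 < t * gap) by (unfold gap; nra). unfold gap in *. nra. Qed.

Lemma has_grad_opp : forall k h gr y, has_grad k h gr y -> has_grad k (fun z => - h z) (vscale (-1) gr) y.
Proof. intros k h gr y H eps He. destruct (H eps He) as [dl [Hdl Hd]]. exists dl; split; auto.
 intros z Hz. rewrite dot_scale_l. specialize (Hd z Hz). rewrite <- Rabs_Ropp. 
 replace (- (- h z - - h y - -1 * dot k gr (vsub z y))) with (h z - h y - dot k gr (vsub z y)) by ring. auto. Qed.

Lemma grad_lb : forall k h gr y w c K, has_grad k h gr y ->
  (forall t, 0 < t <= 1 -> t * c - t * t * K <= h (vadd y (vscale t w)) - h y) -> c <= dot k gr w.
Proof. intros. assert (dot k (vscale (-1) gr) w <= - c).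
 apply (grad_ub k (fun z => - h z) _ y w (- c) K). apply has_grad_opp; auto.
 intros t Ht; specialize (H0 t Ht); lra. rewrite dot_scale_l in H1. lra. Qed.

Lemma grad_cont : forall k h gr y, has_grad k h gr y -> exists dl, 0 < dl /\
  forall z, norm k (vsub z y) < dl -> Rabs (h z - h y) <= (norm k gr + 1) * norm k (vsub z y).
Proof. intros. destruct (H 1) as [dl [Hdl Hd]]; [lra|]. exists dl; split; auto. intros z Hz.
 specialize (Hd z Hz). pose proof (cauchy_schwarz k gr (vsub z y)).
 replace (h z - h y) with ((h z - h y - dot k gr (vsub z y)) + dot k gr (vsub z y)) by ring.
 eapply Rle_trans. apply Rabs_triang. lra. Qed.

Section P.
Variables (d n m : nat) (a : nat -> Vec) (A : Mat) (b : Vec) (g : Vec -> R)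
  (U : Vec -> Prop) (dg : Vec -> Vec) (mu_g : R) (df : Vec -> Vec) (G M MA : R).
Hypothesis (Hn : (0 < n)%nat).
Hypothesis (HUD : forall x, in_conv d n a x -> U (matvec d A x)).
Hypothesis (Hdg : forall y, U y -> has_grad m g (dg y) y).
Hypothesis (Hmug : 0 < mu_g).
Hypothesis (Hsc : forall x1 x2, in_conv d n a x1 -> in_conv d n a x2 -> forall t, 0 <= t <= 1 ->
          g (vadd (vscale t (matvec d A x1)) (vscale (1 - t) (matvec d A x2)))
          <= t * g (matvec d A x1) + (1 - t) * g (matvec d A x2)
             - mu_g / 2 * t * (1 - t) * (norm m (vsub (matvec d A x1) (matvec d A x2))) ^ 2).
Hypothesis (Hdf : forall x, in_conv d n a x ->
          has_grad d (fun z => g (matvec d A z) + dot d b z) (df x) x).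
Hypothesis (HG : is_max (fun u => exists x, in_conv d n a x /\ u = norm m (dg (matvec d A x))) G).
Hypothesis (HM : is_lub (fun u => exists x y, in_conv d n a x /\ in_conv d n a y /\
                  u = norm d (vsub x y)) M).
Hypothesis (HMA : is_lub (fun u => exists x y, in_conv d n a x /\ in_conv d n a y /\
                  u = norm m (vsub (matvec d A x) (matvec d A y))) MA).

Definition ff z := g (matvec d A z) + dot d b z.
Definition inD := in_conv d n a.

Lemma ff_veq : forall x y, veq d x y -> ff x = ff y.
Proof. intros; unfold ff. rewrite (matvec_veq d A x y), (dot_veq_r d x y b); auto. Qed.

Lemma ff_convex : forall x y t, inD x -> inD y -> 0 <= t <= 1 ->
  ff (vadd (vscale t x) (vscale (1 - t) y)) <= t * ff x + (1 - t) * ff y.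
Proof. intros. unfold ff. rewrite matvec_add, !matvec_scale, dot_add_r, !dot_scale_r.
 pose proof (Hsc x y H H0 t H1). assert (0 <= mu_g / 2 * t * (1 - t) * norm m (vsub (matvec d A x) (matvec d A y)) ^ 2).
 { apply Rmult_le_pos. apply Rmult_le_pos. apply Rmult_le_pos. lra. lra. lra. apply pow2_ge_0. } lra. Qed.

Lemma G_nonneg : 0 <= G.
Proof. destruct HG as [[x [Hx ->]] _]. apply norm_pos. Qed.

Lemma ff_min_exists : exists xs, inD xs /\ forall y, inD y -> ff xs <= ff y.
Proof.
 destruct (compact_min n (fun l => (forall i, (i < n)%nat -> 0 <= l i) /\ vsum n l = 1) (fun l => ff (comb n a l)) 1) as [ls [[Hl1 Hl2] Hmin]].
 - intros z [Hz1 Hz2] i Hi. rewrite Rabs_right by (apply Rle_ge; auto). rewrite <- Hz2. apply (vsum_term_le n z i); auto.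
 - intros X y HX Hcv. assert (Cy : (forall i, (i < n)%nat -> 0 <= y i) /\ vsum n y = 1).
   { split. intros i Hi. apply (cv_ge_ev (fun k => X k i) _ _ 0); auto. intros; apply HX; auto.
     apply (UL_sequence (fun k => vsum n (X k))). apply cv_vsum; auto.
     apply (cv_ext_ev (fun _ => 1) _ _ 0%nat); [|apply (cv_const 1)]. intros; simpl. symmetry; apply HX. }
   split; auto.
   assert (Hin : inD (comb n a y)) by (exists y; destruct Cy; repeat split; auto; intros k Hk; auto).
   destruct (grad_cont d ff (df (comb n a y)) (comb n a y)) as [dl [Hdl Hc]]. apply Hdf; auto.
   assert (Hz : forall j, (j < d)%nat -> Un_cv (fun k => comb n a (X k) j) (comb n a y j)).
   { intros. unfold comb. apply cv_vsum. intros. apply CV_mult; auto. apply cv_const. }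
   assert (Hs : Un_cv (fun k => vsum d (fun j => Rabs (comb n a (X k) j - comb n a y j))) 0).
   { rewrite <- (vsum_zero d (fun _ => 0)) by auto. apply cv_vsum. intros j Hj eps He.
     destruct (Hz j Hj eps He) as [N HN]. exists N; intros. unfold Rdist in *. rewrite Rminus_0_r, Rabs_Rabsolu. auto. }
   intros eps He. set (C0 := norm d (df (comb n a y)) + 1). assert (0 < C0) by (unfold C0; pose proof (norm_pos d (df (comb n a y))); lra).
   destruct (Hs (Rmin dl (eps / C0))) as [N HN]. apply Rmin_pos; auto. apply Rdiv_lt_0_compat; auto.
   exists N. intros k Hk. specialize (HN k Hk). unfold Rdist in *. rewrite Rminus_0_r in HN.
   rewrite Rabs_right in HN by (apply Rle_ge, vsum_nonneg; intros; apply Rabs_pos).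
   pose proof (norm_le_sumabs d (vsub (comb n a (X k)) (comb n a y))) as Hns.
   assert (Hlt : norm d (vsub (comb n a (X k)) (comb n a y)) < Rmin dl (eps / C0)) by (eapply Rle_lt_trans; [exact Hns| exact HN]).
   specialize (Hc (comb n a (X k)) ltac:(pose proof (Rmin_l dl (eps/C0)); lra)).
   pose proof (Rmin_r dl (eps / C0)) as Hr. assert (Hm : C0 * norm d (vsub (comb n a (X k)) (comb n a y)) < C0 * (eps / C0)) by (apply Rmult_lt_compat_l; lra).
   replace (C0 * (eps / C0)) with eps in Hm by (field; lra). fold C0 in Hc. lra.
 - destruct (conv_vertex d n a 0 Hn) as [l [H1 [H2 _]]]. exists l; split; auto.
 - exists (comb n a ls). split. { exists ls. split; [auto|split; [auto| intros k Hk; reflexivity]]. }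
   intros y Hy. destruct Hy as [ly [Hy1 [Hy2 Hy3]]]. rewrite (ff_veq y (comb n a ly)) by auto. apply Hmin. split; auto.
Qed.

Lemma comb2_eq : forall x y t, vadd y (vscale t (vsub x y)) = vadd (vscale t x) (vscale (1 - t) y).
Proof. intros; apply functional_extensionality; intro i; unfold vadd, vscale, vsub; ring. Qed.

Lemma grad_ineq : forall x y, inD x -> inD y -> dot d (df x) (vsub y x) <= ff y - ff x.
Proof. intros. apply (grad_ub d ff (df x) x (vsub y x) (ff y - ff x) 0). apply Hdf; auto.
 intros t Ht. rewrite comb2_eq. pose proof (ff_convex y x t H0 H ltac:(lra)). lra. Qed.

Lemma M_nonneg : 0 <= M.
Proof. destruct HM as [Hub _]. destruct (conv_vertex d n a 0 Hn) as [l Hl].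
 apply Hub. exists (a 0%nat), (a 0%nat). split. apply conv_vertex; auto. split. apply conv_vertex; auto.
 unfold norm, dot, vsub. rewrite vsum_zero. symmetry; apply sqrt_0. intros; ring. Qed.

Lemma quad_growth : forall x x1, inD x -> inD x1 -> (forall y, inD y -> ff x1 <= ff y) ->
  let W := vsub (matvec d A x) (matvec d A x1) in
  let beta := dot d b (vsub x x1) in
  beta ^ 2 + norm m W ^ 2 <= (norm d b * M + 3 * G * MA + 2 / mu_g * (G ^ 2 + 1)) * (ff x - ff x1).
Proof. intros x x1 Hx Hx1 Hopt W beta.
 set (t1 := matvec d A x1). set (w := norm m W). set (u := ff x - ff x1).
 assert (Hu : 0 <= u) by (unfold u; specialize (Hopt x Hx); lra).
 assert (HU1 : U t1) by (apply HUD; auto).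
 assert (Hmat : forall t, matvec d A (vadd x1 (vscale t (vsub x x1))) = vadd t1 (vscale t W)).
 { intros. rewrite matvec_add, matvec_scale, matvec_sub. auto. }
 set (D1 := dot m (dg t1) W).
 (* (i) optimality *)
 assert (H1 : - beta <= D1).
 { apply (grad_lb m g (dg t1) t1 W (- beta) 0). apply Hdg; auto.
   intros t Ht. rewrite <- Hmat. assert (Hz : inD (vadd x1 (vscale t (vsub x x1)))).
   { rewrite comb2_eq. apply conv_convex; auto; lra. }
   specialize (Hopt _ Hz). unfold ff in Hopt. rewrite dot_add_r, dot_scale_r in Hopt. fold t1 in Hopt. fold beta in Hopt. lra. }
 (* (ii) strong convexity *)
 assert (H2 : D1 <= g (matvec d A x) - g t1 - mu_g / 2 * w ^ 2).
 { apply (grad_ub m g (dg t1) t1 W _ (mu_g / 2 * w ^ 2)). apply Hdg; auto.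
   intros t Ht. pose proof (Hsc x x1 Hx Hx1 t ltac:(lra)).
   replace (vadd (vscale t (matvec d A x)) (vscale (1 - t) (matvec d A x1))) with (vadd t1 (vscale t W)) in H.
   change (norm m (vsub (matvec d A x) t1)) with w in H. assert (t * (g (matvec d A x) - g t1 - mu_g / 2 * w ^ 2) + t * t * (mu_g / 2 * w ^ 2) = t * g (matvec d A x) + (1 - t) * g t1 - mu_g / 2 * t * (1 - t) * w ^ 2 - g t1) by ring. unfold w, W, t1 in *. lra. rewrite <- comb2_eq. auto. }
 assert (Hff : u = g (matvec d A x) - g t1 + beta).
 { unfold u, ff, beta. rewrite dot_sub_r. fold t1. ring. }
 assert (H3 : Rabs D1 <= G * w).
 { eapply Rle_trans. apply cauchy_schwarz. apply Rmult_le_compat_r. apply norm_pos.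
   destruct HG as [_ HG2]. apply HG2. exists x1; auto. }
 assert (H4 : Rabs beta <= norm d b * M).
 { eapply Rle_trans. apply cauchy_schwarz. apply Rmult_le_compat_l. apply norm_pos.
   destruct HM as [HM1 _]. apply HM1. exists x, x1; auto. }
 assert (H5 : w <= MA). { destruct HMA as [HM1 _]. apply HM1. exists x, x1; auto. }
 pose proof G_nonneg as HG0. pose proof (norm_pos m W) as Hw0. fold w in Hw0.
 assert (Hw2 : w ^ 2 <= 2 / mu_g * u).
 { assert (mu_g / 2 * w ^ 2 <= u) by lra. apply Rmult_le_compat_l with (r := 2 / mu_g) in H; [|left; apply Rdiv_lt_0_compat; lra].
   replace (2 / mu_g * (mu_g / 2 * w ^ 2)) with (w ^ 2) in H by (field; lra). auto. }
 assert (Hb1 : Rabs beta <= u + G * w).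
 { assert (0 <= mu_g / 2 * w ^ 2) by (apply Rmult_le_pos; [lra| apply pow2_ge_0]). apply Rabs_le. apply abs_le_inv in H3. lra. }
 pose proof (Rabs_pos beta) as Hb0.
 assert (Hbb : beta ^ 2 = Rabs beta * Rabs beta).
 { rewrite <- Rabs_mult. rewrite Rabs_right. ring. apply Rle_ge. pose proof (Rle_0_sqr beta). unfold Rsqr in *; lra. }
 assert (Hb2 : beta ^ 2 <= norm d b * M * u + G * MA * u + 2 / mu_g * G ^ 2 * u).
 { rewrite Hbb. assert (Rabs beta * Rabs beta <= Rabs beta * (u + G * w)) by (apply Rmult_le_compat_l; auto).
   assert (Rabs beta * u <= norm d b * M * u) by (apply Rmult_le_compat_r; auto).
   assert (Rabs beta * (G * w) <= (u + G * w) * (G * w)) by (apply Rmult_le_compat_r; nra).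
   assert (u * (G * w) <= G * MA * u).
   { assert (0 <= G * u) by (apply Rmult_le_pos; lra). replace (u * (G * w)) with ((G * u) * w) by ring.
     replace (G * MA * u) with ((G * u) * MA) by ring. apply Rmult_le_compat_l; auto. }
   assert (G * w * (G * w) <= 2 / mu_g * G ^ 2 * u).
   { replace (G * w * (G * w)) with (G ^ 2 * w ^ 2) by ring. replace (2 / mu_g * G ^ 2 * u) with (G ^ 2 * (2 / mu_g * u)) by ring.
     apply Rmult_le_compat_l; auto. apply pow2_ge_0. }
   lra. }
 assert (0 <= G * MA * u) by (pose proof (Rle_trans _ _ _ Hw0 H5); apply Rmult_le_pos; [apply Rmult_le_pos|]; lra).
 assert (0 <= 2 / mu_g) by (left; apply Rdiv_lt_0_compat; lra).
 assert (w ^ 2 = norm m W ^ 2) by reflexivity.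
 replace ((norm d b * M + 3 * G * MA + 2 / mu_g * (G ^ 2 + 1)) * (ff x - ff x1)) with
   (norm d b * M * u + G * MA * u + 2 / mu_g * G ^ 2 * u + 2 * (G * MA * u) + 2 / mu_g * u) by (unfold u; ring).
 lra. Qed.
End P.

Lemma lim_small : forall A B h0, 0 < h0 -> (forall h, 0 < h <= h0 -> 0 <= A + h * B) -> 0 <= A.
Proof. intros. destruct (Rle_lt_dec 0 A); auto. exfalso. pose proof (Rabs_pos B).
 set (h := Rmin h0 (- A / (2 * (Rabs B + 1)))).
 assert (0 < h) by (apply Rmin_pos; auto; apply Rdiv_lt_0_compat; lra).
 assert (h <= - A / (2 * (Rabs B + 1))) by apply Rmin_r.
 specialize (H0 h (conj H2 (Rmin_l _ _))).
 assert (h * (Rabs B + 1) <= - A / 2). { apply Rmult_le_compat_r with (r := Rabs B + 1) in H3; [|lra].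
   replace (- A / (2 * (Rabs B + 1)) * (Rabs B + 1)) with (- A / 2) in H3 by (field; lra). auto. }
 assert (h * B <= h * Rabs B) by (apply Rmult_le_compat_l; [lra| apply Rle_abs]). lra. Qed.

Lemma vsum_delta : forall N F i, (i < N)%nat -> vsum N (fun k => if Nat.eq_dec k i then F k else 0) = F i.
Proof. induction N; intros; [lia|]. simpl. destruct (Nat.eq_dec N i). subst. rewrite vsum_zero. ring.
 intros; destruct (Nat.eq_dec i0 i); [lia|]; ring. rewrite IHN by lia. ring. Qed.

Section Geo.
Variables (d n : nat) (a : nat -> Vec) (x q : Vec).

Definition rv (t : Vec) : Vec := fun j => vsum n (fun i => t i * (a i j - x j)).
Definition psi (dl : R) (t : Vec) := dot d (vsub q (rv t)) (vsub q (rv t)) + dl * vsum n t.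
Definition bump (t : Vec) (i : nat) (h : R) : Vec := fun k => t k + (if Nat.eq_dec k i then h else 0).

Lemma psi_bump : forall dl t i h, (i < n)%nat ->
  psi dl (bump t i h) = psi dl t - 2 * h * dot d (vsub q (rv t)) (vsub (a i) x)
     + h * h * dot d (vsub (a i) x) (vsub (a i) x) + dl * h.
Proof. intros. unfold psi.
 assert (Hr : vsub q (rv (bump t i h)) = vsub (vsub q (rv t)) (vscale h (vsub (a i) x))).
 { apply functional_extensionality; intro j. unfold vsub, vscale, rv, bump.
   transitivity (q j - (vsum n (fun k => t k * (a k j - x j)) + vsum n (fun k => if Nat.eq_dec k i then h * (a k j - x j) else 0))).
   rewrite <- vsum_plus. f_equal. apply vsum_ext; intros. destruct (Nat.eq_dec i0 i); ring.
   rewrite vsum_delta by auto. subst; ring. }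
 assert (Hs : vsum n (bump t i h) = vsum n t + h).
 { unfold bump. rewrite vsum_plus. rewrite (vsum_delta n (fun _ => h)) by auto. auto. }
 rewrite Hr, Hs. set (p := vsub q (rv t)). set (g := vsub (a i) x).
 rewrite !dot_sub_l, !dot_sub_r, !dot_scale_l, !dot_scale_r. rewrite (dot_sym d g p). ring. Qed.

Lemma min_reg : forall dl, 0 < dl -> exists t, (forall i, (i < n)%nat -> 0 <= t i) /\
  (forall i, (i < n)%nat -> dot d (vsub q (rv t)) (vsub (a i) x) <= dl / 2) /\
  (forall i, (i < n)%nat -> 0 < t i -> dot d (vsub q (rv t)) (vsub (a i) x) = dl / 2) /\
  dot d (vsub q (rv t)) (vsub q (rv t)) <= dot d q q.
Proof. intros dl Hdl. set (R0 := (dot d q q + 1) / dl).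
 assert (HR0 : 0 < R0) by (unfold R0; apply Rdiv_lt_0_compat; [pose proof (dot_pos d q)|]; lra).
 destruct (compact_min n (fun t => forall i, (i < n)%nat -> 0 <= t i <= R0) (psi dl) R0) as [t [Ht Hmin]].
 - intros z Hz i Hi. specialize (Hz i Hi). rewrite Rabs_right; lra.
 - intros X y HX Hcv. split.
   + intros i Hi. split. apply (cv_ge_ev (fun k => X k i) _ _ 0); auto. intros; apply HX; auto.
     apply (cv_le_ev (fun k => X k i) _ _ 0); auto. intros; apply HX; auto.
   + unfold psi. apply CV_plus. unfold dot. apply cv_vsum. intros j Hj.
     assert (Un_cv (fun k => vsub q (rv (X k)) j) (vsub q (rv y) j)).
     { unfold vsub, rv. apply CV_minus. apply cv_const. apply cv_vsum. intros. apply CV_mult; auto. apply cv_const. }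
     apply CV_mult; auto. apply CV_mult. apply cv_const. apply cv_vsum; auto.
 - exists (fun _ => 0). intros; lra.
 - assert (H0 : psi dl t <= dot d q q).
   { specialize (Hmin (fun _ => 0) ltac:(intros; lra)). unfold psi at 2 in Hmin.
     rewrite vsum_zero in Hmin by auto. replace (dot d (vsub q (rv (fun _ => 0))) (vsub q (rv (fun _ => 0)))) with (dot d q q) in Hmin. lra.
     unfold dot; apply vsum_ext; intros. unfold vsub, rv. rewrite vsum_zero. ring. intros; ring. }
   assert (Hsum : 0 <= vsum n t) by (apply vsum_nonneg; intros; apply Ht; auto).
   assert (Hlt : forall i, (i < n)%nat -> t i < R0).
   { intros. assert (t i <= vsum n t) by (apply vsum_term_le; auto; intros; apply Ht; auto).
     unfold psi in H0. pose proof (dot_pos d (vsub q (rv t))).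
     assert (dl * vsum n t <= dot d q q) by lra.
     assert (dl * R0 = dot d q q + 1) by (unfold R0; field; lra). nra. }
   exists t. split; [intros; apply Ht; auto|]. split; [|split].
   + intros i Hi. set (c := dot d (vsub q (rv t)) (vsub (a i) x)). set (G2 := dot d (vsub (a i) x) (vsub (a i) x)).
     assert (0 <= dl - 2 * c). apply (lim_small _ G2 (R0 - t i)). specialize (Hlt i Hi); lra.
     intros h Hh. assert (Hb : forall k, (k < n)%nat -> 0 <= bump t i h k <= R0).
     { intros k Hk. unfold bump. specialize (Ht k Hk). destruct (Nat.eq_dec k i). subst; lra. lra. }
     specialize (Hmin _ Hb). rewrite psi_bump in Hmin by auto. fold c G2 in Hmin.
     assert (0 <= h * (dl - 2 * c + h * G2)) by nra. 
     apply Rmult_le_reg_l with h; lra. lra.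
   + intros i Hi Hti. set (c := dot d (vsub q (rv t)) (vsub (a i) x)). set (G2 := dot d (vsub (a i) x) (vsub (a i) x)).
     assert (0 <= dl - 2 * c). { apply (lim_small _ G2 (R0 - t i)). specialize (Hlt i Hi); lra.
     intros h Hh. assert (Hb : forall k, (k < n)%nat -> 0 <= bump t i h k <= R0).
     { intros k Hk. unfold bump. specialize (Ht k Hk). destruct (Nat.eq_dec k i). subst; lra. lra. }
     specialize (Hmin _ Hb). rewrite psi_bump in Hmin by auto. fold c G2 in Hmin.
     assert (0 <= h * (dl - 2 * c + h * G2)) by nra. apply Rmult_le_reg_l with h; lra. }
     assert (0 <= 2 * c - dl). { apply (lim_small _ G2 (t i)); auto.
     intros h Hh. assert (Hb : forall k, (k < n)%nat -> 0 <= bump t i (- h) k <= R0).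
     { intros k Hk. unfold bump. specialize (Ht k Hk). destruct (Nat.eq_dec k i). subst; lra. lra. }
     specialize (Hmin _ Hb). rewrite psi_bump in Hmin by auto. fold c G2 in Hmin.
     assert (0 <= h * (2 * c - dl + h * G2)) by nra. apply Rmult_le_reg_l with h; lra. }
     lra.
   + unfold psi in H0. assert (0 <= dl * vsum n t) by (apply Rmult_le_pos; lra). lra.
Qed.
End Geo.

Lemma list_max : forall (l : list R) (W : R -> Prop), (forall w, W w -> In w l) -> (exists w, W w) ->
  exists w, W w /\ forall y, W y -> y <= w.
Proof. induction l; intros W Hl [w0 Hw0].
 - destruct (Hl w0 Hw0).
 - destruct (classic (exists w, W w /\ In w l)) as [[w1 [Hw1 Hin]]|Hno].
   + destruct (IHl (fun w => W w /\ In w l)) as [w' [[Hw' _] Hmax]]. intros w [_ H]; auto. eauto.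
     destruct (classic (W a)) as [Ha|Ha].
     * destruct (Rle_lt_dec a w'). exists w'; split; auto. intros y Hy. destruct (Hl y Hy). subst; auto. apply Hmax; auto.
       exists a; split; auto. intros y Hy. destruct (Hl y Hy). subst; lra. specialize (Hmax y (conj Hy H)). lra.
     * exists w'; split; auto. intros y Hy. destruct (Hl y Hy). subst; tauto. apply Hmax; auto.
   + assert (W a). { destruct (Hl w0 Hw0). subst; auto. exfalso; apply Hno; eauto. }
     exists a; split; auto. intros y Hy. destruct (Hl y Hy). subst; lra. exfalso; apply Hno; eauto.
Qed.

Lemma list_min : forall (l : list R) (W : R -> Prop), (forall w, W w -> In w l) -> (exists w, W w) ->
  exists w, W w /\ forall y, W y -> w <= y.
Proof. intros l W Hl H0. destruct (list_max (map Ropp l) (fun w => W (- w))) as [w [Hw Hm]].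
 intros w Hw. apply Hl in Hw. replace w with (- - w) by ring. apply in_map; auto.
 destruct H0 as [w Hw]. exists (- w). rewrite Ropp_involutive; auto.
 exists (- w). split; auto. intros y Hy. assert (- y <= w). apply Hm. rewrite Ropp_involutive; auto. lra. Qed.

Definition all_vals (n : nat) (h : nat -> nat -> R) : list R :=
  flat_map (fun i => map (fun j => h i j) (seq 0 n)) (seq 0 n).

Lemma all_vals_in : forall n h i j, (i < n)%nat -> (j < n)%nat -> In (h i j) (all_vals n h).
Proof. intros. unfold all_vals. apply in_flat_map. exists i. split. apply in_seq; lia.
 apply in_map. apply in_seq; lia. Qed.

Lemma Sx_nonempty : forall d n a Bs x S, in_Sx d n a Bs x S -> exists v, S v.
Proof. intros d n a Bs x S [HS [lam [H1 [H2 [H3 H4]]]]]. apply NNPP; intro Hno.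
 rewrite vsum_zero in H3. lra. intros; apply H2; auto. intro; apply Hno; eauto. Qed.

Lemma pdirw_exists : forall d n a (Bs : nat -> Prop) r x S0 B0,
  in_Sx d n a Bs x S0 ->
  (forall s' v', (s' < n)%nat -> Bs s' -> S0 v' -> dot d (vscale (/ norm d r) r) (vsub (a s') (a v')) <= B0) ->
  exists w, PdirW_is d n a Bs r x w /\ w <= B0 /\ 0 <= w.
Proof. intros d n a Bs r x S0 B0 HS0 HB.
 set (h := fun s' v' => dot d (vscale (/ norm d r) r) (vsub (a s') (a v'))).
 assert (Hmax : forall S, in_Sx d n a Bs x S -> exists w, is_max (fun u => exists s v, (s < n)%nat /\ Bs s /\ S v /\ u = h s v) w /\ 0 <= w).
 { intros S HS. destruct (list_max (all_vals n h) (fun u => exists s v, (s < n)%nat /\ Bs s /\ S v /\ u = h s v)) as [w [Hw Hm]].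
   - intros u [s [v [Hs [HBs [HSv ->]]]]]. apply all_vals_in; auto. apply (proj1 HS v HSv).
   - destruct (Sx_nonempty _ _ _ _ _ _ HS) as [v Hv]. destruct (proj1 HS v Hv). exists (h v v), v, v; auto.
   - exists w; split; [split; auto|]. destruct (Sx_nonempty _ _ _ _ _ _ HS) as [v Hv]. destruct (proj1 HS v Hv).
     assert (h v v = 0). { unfold h. rewrite dot_scale_l. unfold dot, vsub. rewrite vsum_zero. ring. intros; ring. }
     rewrite <- H1. apply Hm. exists v, v; auto. }
 destruct (list_min (all_vals n h) (fun w' => exists S, in_Sx d n a Bs x S /\ is_max (fun u => exists s v, (s < n)%nat /\ Bs s /\ S v /\ u = h s v) w')) as [w [Hw Hm]].
 - intros w' [S [HS [[s [v [Hs [HBs [HSv ->]]]]] _]]]. apply all_vals_in; auto. apply (proj1 HS v HSv).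
 - destruct (Hmax S0 HS0) as [w [Hw _]]. eauto.
 - exists w. split. split; auto. destruct Hw as [S [HS Hmw]]. split.
   + destruct (Hmax S0 HS0) as [w0 [Hw0 _]]. eapply Rle_trans. apply Hm. exists S0; eauto.
     destruct Hw0 as [[s [v [Hs [HBs [HSv ->]]]]] _]. apply HB; auto.
   + destruct (Hmax S HS) as [w1 [Hw1 Hp]]. destruct Hmw as [Hin1 Hle1]. destruct Hw1 as [Hin2 Hle2].
     assert (w = w1) by (apply Rle_antisym; auto). lra.
Qed.

Lemma finite_ev : forall N (P : nat -> nat -> Prop), (forall i, (i < N)%nat -> exists K, forall k, (k >= K)%nat -> P i k) ->
  exists K, forall i, (i < N)%nat -> forall k, (k >= K)%nat -> P i k.
Proof. induction N; intros. exists 0%nat; intros; lia.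
 destruct (IHN P) as [K1 HK1]. intros; apply H; lia. destruct (H N) as [K2 HK2]. lia.
 exists (max K1 K2). intros. destruct (Nat.eq_dec i N). subst; apply HK2; lia. apply HK1; lia. Qed.

Lemma dot_abs_bound : forall k u w eta, (forall j, (j < k)%nat -> Rabs (u j) <= eta) ->
  Rabs (dot k u w) <= eta * vsum k (fun j => Rabs (w j)).
Proof. intros. unfold dot. eapply Rle_trans. apply vsum_abs. rewrite <- vsum_scal. apply vsum_le.
 intros. rewrite Rabs_mult. apply Rmult_le_compat_r. apply Rabs_pos. auto. Qed.

Lemma pwidth_nonneg : forall d n a w, PWidth_set d n a w -> 0 <= w.
Proof. intros d n a w [K [_ [_ [x [r [_ [_ [_ [[S [HS [Hin Hle]]] _]]]]]]]]].
 destruct (Sx_nonempty _ _ _ _ _ _ HS) as [v Hv]. destruct (proj1 HS v Hv).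
 eapply Rle_trans; [|apply Hle]. 2: { exists v, v. split; auto. }
 rewrite dot_scale_l. unfold dot, vsub. rewrite vsum_zero. lra. intros; ring. Qed.

Lemma ind01 : forall (u : nat -> R) l, (forall k, u k = 0 \/ u k = 1) -> Un_cv u l ->
  exists K, forall k, (k >= K)%nat -> u k = u K.
Proof. intros u l H Hc. destruct (Hc (1/2)) as [K HK]; [lra|]. exists K. intros.
 pose proof (HK k H0) as H1. pose proof (HK K (le_n K)) as H2. unfold Rdist in *.
 apply Rabs_def2 in H1. apply Rabs_def2 in H2.
 destruct (H k) as [E1|E1]; destruct (H K) as [E2|E2]; rewrite E1, E2 in *; lra. Qed.

Section GeoMain.
Variables (d n : nat) (a : nat -> Vec) (x q xs : Vec) (S0 : nat -> Prop) (den : R).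
Hypothesis (Hx : in_conv d n a x) (Hxs : in_conv d n a xs) (Hal : 0 < dot d q (vsub xs x))
 (HS0 : in_Sx d n a (fun i => (i < n)%nat) x S0)
 (Hden : forall s' u', (s' < n)%nat -> S0 u' -> dot d q (vsub (a s') (a u')) <= den).

Definition Ca := vsum n (fun i => vsum d (fun j => Rabs (a i j))).

Lemma Ca_bound : forall i, (i < n)%nat -> vsum d (fun j => Rabs (a i j)) <= Ca.
Proof. intros. unfold Ca. apply (vsum_term_le n (fun i => vsum d (fun j => Rabs (a i j)))); auto.
 intros; apply vsum_nonneg; intros; apply Rabs_pos. Qed.

Lemma den_nonneg : 0 <= den.
Proof. destruct (Sx_nonempty _ _ _ _ _ _ HS0) as [u Hu]. destruct (proj1 HS0 u Hu).
 specialize (Hden u u H Hu). unfold dot, vsub in Hden. rewrite vsum_zero in Hden; auto. intros; ring. Qed.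

Lemma geo_step : forall eta, 0 < eta -> exists w dl, PWidth_set d n a w /\ 0 < dl <= eta /\
  dl / 2 < dot d q (vsub xs x) /\
  w * (dot d q (vsub xs x) - dl / 2) <= (den + 2 * eta * Ca) * norm d (vsub xs x).
Proof. intros eta Heta. set (al := dot d q (vsub xs x)). fold al in Hal.
 set (dlk := fun k : nat => / (INR k + 1)).
 assert (Hdlk : forall k, 0 < dlk k) by (intros; unfold dlk; apply Rinv_0_lt_compat; pose proof (pos_INR k); lra).
 assert (HT : forall k, exists t, (forall i, (i < n)%nat -> 0 <= t i) /\
  (forall i, (i < n)%nat -> dot d (vsub q (rv n a x t)) (vsub (a i) x) <= dlk k / 2) /\
  (forall i, (i < n)%nat -> 0 < t i -> dot d (vsub q (rv n a x t)) (vsub (a i) x) = dlk k / 2) /\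
  dot d (vsub q (rv n a x t)) (vsub q (rv n a x t)) <= dot d q q) by (intros; apply min_reg; auto).
 set (T := fun k => proj1_sig (constructive_indefinite_description _ (HT k))).
 assert (HTk : forall k, (forall i, (i < n)%nat -> 0 <= T k i) /\
  (forall i, (i < n)%nat -> dot d (vsub q (rv n a x (T k))) (vsub (a i) x) <= dlk k / 2) /\
  (forall i, (i < n)%nat -> 0 < T k i -> dot d (vsub q (rv n a x (T k))) (vsub (a i) x) = dlk k / 2) /\
  dot d (vsub q (rv n a x (T k))) (vsub q (rv n a x (T k))) <= dot d q q).
 { intros; unfold T; destruct (constructive_indefinite_description _ _); simpl; auto. }
 set (P := fun k => vsub q (rv n a x (T k))).
 assert (HPb : forall k j, (j < d)%nat -> Rabs (P k j) <= norm d q).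
 { intros. eapply Rle_trans. apply (comp_le_norm d); auto. unfold norm. apply sqrt_le_1_alt. apply (proj2 (proj2 (proj2 (HTk k)))). }
 set (ind := fun k i => if Rlt_dec 0 (T k i) then 1 else 0).
 set (Y := fun k j => if lt_dec j d then P k j else ind k (j - d)%nat).
 destruct (bwN (d + n) Y (norm d q + 1)) as [phi [Hphi [y Hy]]].
 { intros k j Hj. unfold Y. pose proof (norm_pos d q). destruct (lt_dec j d). specialize (HPb k j l); lra.
   unfold ind. destruct (Rlt_dec _ _); rewrite ?Rabs_R1, ?Rabs_R0; lra. }
 assert (Hp : forall j, (j < d)%nat -> Un_cv (fun k => P (phi k) j) (y j)).
 { intros. apply (cv_ext_ev (fun k => Y (phi k) j) _ _ 0). intros; unfold Y. destruct (lt_dec j d); auto; lia.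
   apply Hy; lia. }
 assert (Hind : forall i, (i < n)%nat -> Un_cv (fun k => ind (phi k) i) (y (d + i)%nat)).
 { intros. apply (cv_ext_ev (fun k => Y (phi k) (d + i)%nat) _ _ 0). intros; unfold Y. destruct (lt_dec (d + i) d). lia.
   replace (d + i - d)%nat with i by lia. auto. apply Hy; lia. }
 assert (Hdot : forall w, Un_cv (fun k => dot d (P (phi k)) w) (dot d y w)).
 { intros. unfold dot. apply cv_vsum. intros. apply CV_mult; auto. apply cv_const. }
 assert (Hdl0 : Un_cv (fun k => dlk (phi k) / 2) 0).
 { intros eps He. destruct (inv_small eps He) as [K HK]. exists K. intros. unfold Rdist. rewrite Rminus_0_r.
   pose proof (incr_ge phi Hphi n0). specialize (HK (phi n0) ltac:(lia)). specialize (Hdlk (phi n0)).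
   rewrite Rabs_right by lra. unfold dlk in *. lra. }
 assert (Hle : forall i, (i < n)%nat -> dot d y (vsub (a i) x) <= 0).
 { intros. assert (forall e, 0 < e -> dot d y (vsub (a i) x) <= e).
   { intros e He. destruct (Hdl0 e He) as [K HK]. apply (cv_le_ev (fun k => dot d (P (phi k)) (vsub (a i) x)) _ _ K); [|apply Hdot].
     intros k Hk. specialize (HK k Hk). unfold Rdist in HK. rewrite Rminus_0_r in HK. apply Rabs_def2 in HK.
     destruct (HTk (phi k)) as [_ [H2 _]]. specialize (H2 i H). unfold P. lra. }
   destruct (Rle_lt_dec (dot d y (vsub (a i) x)) 0); auto. specialize (H0 (dot d y (vsub (a i) x) / 2) ltac:(lra)). lra. }
 assert (Hind01 : forall i k, ind k i = 0 \/ ind k i = 1) by (intros; unfold ind; destruct (Rlt_dec _ _); auto).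
 destruct (finite_ev n (fun i k => forall k', (k' >= k)%nat -> ind (phi k') i = ind (phi k) i)) as [Ks HKs].
 { intros. destruct (ind01 (fun k => ind (phi k) i) _ (fun k => Hind01 i (phi k)) (Hind i H)) as [K HK].
   exists K. intros. rewrite HK, (HK k) by lia. auto. }
 assert (Hzero : forall i, (i < n)%nat -> forall k, (k >= Ks)%nat -> 0 < T (phi k) i -> dot d y (vsub (a i) x) = 0).
 { intros i Hi k Hk Hpos. assert (Hi1 : ind (phi k) i = 1) by (unfold ind; destruct (Rlt_dec _ _); tauto).
   assert (Hall : forall k', (k' >= Ks)%nat -> 0 < T (phi k') i).
   { intros. pose proof (HKs i Hi Ks (le_n _) k' H). pose proof (HKs i Hi Ks (le_n _) k Hk).
     assert (ind (phi k') i = 1) by congruence. unfold ind in H2. destruct (Rlt_dec _ _); auto. lra. }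
   apply (UL_sequence (fun k => dot d (P (phi k)) (vsub (a i) x))). apply Hdot.
   apply (cv_ext_ev (fun k => dlk (phi k) / 2) _ _ Ks); auto. intros. symmetry. apply HTk; auto. }
 destruct (finite_ev d (fun j k => Rabs (P (phi k) j - y j) <= eta)) as [Ke HKe].
 { intros j Hj. destruct (Hp j Hj eta Heta) as [K HK]. exists K. intros. left. apply HK; auto. }
 destruct (inv_small (Rmin eta al)) as [Kd HKd]. apply Rmin_pos; auto.
 set (k0 := max Ks (max Ke Kd)).
 set (t := T (phi k0)). set (Pv := P (phi k0)). set (dl := dlk (phi k0)). set (r := rv n a x t).
 destruct (HTk (phi k0)) as [Ht0 [HtA [HtB _]]]. fold t in Ht0, HtA, HtB. fold dl in HtA, HtB.
 assert (Hdl1 : dl < Rmin eta al). { unfold dl. pose proof (incr_ge phi Hphi k0). apply HKd. unfold k0 in *; lia. }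
 pose proof (Rmin_l eta al). pose proof (Rmin_r eta al). pose proof (Hdlk (phi k0)) as Hdl0'. fold dl in Hdl0'.
 set (F := fun z => in_conv d n a z /\ forall z', in_conv d n a z' -> dot d y z' <= dot d y z).
 assert (HFx : F x).
 { split; auto. intros z' Hz'. apply (conv_le d n a z' y); auto. intros. specialize (Hle i H1). rewrite dot_sub_r in Hle. lra. }
 assert (HFa : forall i, (i < n)%nat -> dot d y (vsub (a i) x) = 0 -> F (a i)).
 { intros. split. apply conv_vertex; auto. intros z' Hz'. destruct HFx as [_ Hm]. specialize (Hm z' Hz'). rewrite dot_sub_r in H2. lra. }
 assert (HFS0 : forall u, S0 u -> F (a u)).
 { intros u Hu. destruct HS0 as [HSi [lam [Hl1 [Hl2 [Hl3 Hl4]]]]]. destruct (HSi u Hu) as [Hun _].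
   apply HFa; auto.
   assert (Hsum : vsum n (fun i => lam i * dot d y (vsub (a i) x)) = 0).
   { transitivity (vsum n (fun i => lam i * dot d y (a i)) - dot d y x * vsum n lam).
     rewrite <- vsum_scal, <- vsum_minus. apply vsum_ext; intros. rewrite dot_sub_r; ring.
     rewrite <- dot_comb. rewrite <- (dot_veq_r d x (comb n a lam) y) by auto. rewrite Hl3; ring. }
   assert (Hnn : forall i, (i < n)%nat -> 0 <= lam i).
   { intros. destruct (classic (S0 i)). left; apply Hl1; auto. rewrite Hl2; auto; lra. }
   pose proof (vsum_nonpos_zero n (fun i => lam i * dot d y (vsub (a i) x)) u) as Hz.
   simpl in Hz. assert (lam u * dot d y (vsub (a u) x) = 0). apply Hz; auto.
   intros. specialize (Hle j H1). specialize (Hnn j H1). nra.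
   specialize (Hl1 u Hun Hu). destruct (Rmult_integral _ _ H1); [lra| auto]. }
 assert (HFpos : forall i, (i < n)%nat -> 0 < t i -> F (a i)).
 { intros. apply HFa; auto. apply (Hzero i H1 k0); auto. unfold k0; lia. }
 assert (Hcone : in_cone d F x r).
 { exists n, t, (fun i => if Rlt_dec 0 (t i) then a i else x). split.
   intros j Hj. split. apply Ht0; auto. destruct (Rlt_dec 0 (t j)); auto.
   intros k Hk. unfold r, rv. apply vsum_ext. intros i Hi. destruct (Rlt_dec 0 (t i)); auto.
   assert (t i = 0) by (specialize (Ht0 i Hi); lra). rewrite H1; ring. }
 assert (HPv : dot d Pv (vsub xs x) <= dl / 2).
 { rewrite dot_sub_r. assert (dot d Pv xs <= dot d Pv x + dl / 2). apply (conv_le d n a xs Pv); auto.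
   intros. specialize (HtA i H1). rewrite dot_sub_r in HtA. unfold Pv, P. fold t. lra. lra. }
 assert (Hre : al - dl / 2 <= dot d r (vsub xs x)).
 { assert (dot d Pv (vsub xs x) = al - dot d r (vsub xs x)) by (unfold Pv, P; fold t r; rewrite dot_sub_l; auto). lra. }
 assert (Hnr : ~ veq d r (fun _ => 0)).
 { intro Hv. rewrite (dot_veq_l d r (fun _ => 0)) in Hre by auto. unfold dot in Hre. rewrite vsum_zero in Hre. lra. intros; ring. }
 assert (Hnr0 : 0 < norm d r) by (apply norm_pos_neq; auto).
 assert (Hne : al - dl / 2 <= norm d r * norm d (vsub xs x)) by (eapply Rle_trans; [apply Hre| apply dot_le_norm]).
 set (Nb := den + 2 * eta * Ca).
 assert (HCa : 0 <= Ca) by (apply vsum_nonneg; intros; apply vsum_nonneg; intros; apply Rabs_pos).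
 pose proof den_nonneg as Hden0.
 assert (HNb : 0 <= Nb) by (unfold Nb; nra).
 set (B0 := Nb * norm d (vsub xs x) / (al - dl / 2)).
 destruct (pdirw_exists d n a (fun i => (i < n)%nat /\ F (a i)) r x S0 B0) as [w [Hw [HwB Hw0]]].
 - destruct HS0 as [HSi Hl]. split; auto. intros i Hi. destruct (HSi i Hi). split; auto.
 - intros s' u' Hs' [_ HFs] Hu'. rewrite dot_scale_l.
   assert (Hdr : dot d r (vsub (a s') (a u')) <= Nb).
   { assert (Heq1 : dot d r (vsub (a s') (a u')) = dot d q (vsub (a s') (a u')) - dot d (vsub Pv y) (vsub (a s') (a u')) - dot d y (vsub (a s') (a u'))).
     { unfold Pv, P. fold t r. rewrite !dot_sub_l. ring. }
     assert (Heq2 : dot d y (vsub (a s') (a u')) = 0).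
     { rewrite dot_sub_r. destruct HFs as [Hs1 Hs2]. destruct (HFS0 u' Hu') as [Hu1 Hu2].
       specialize (Hs2 _ Hu1). specialize (Hu2 _ Hs1). lra. }
     assert (Habs : Rabs (dot d (vsub Pv y) (vsub (a s') (a u'))) <= eta * vsum d (fun j => Rabs (vsub (a s') (a u') j))).
     { apply dot_abs_bound. intros j Hj. unfold vsub, Pv. apply (HKe j Hj k0). unfold k0; lia. }
     assert (Hsb : vsum d (fun j => Rabs (vsub (a s') (a u') j)) <= 2 * Ca).
     { destruct (proj1 HS0 u' Hu') as [Hun _].
       assert (vsum d (fun j => Rabs (vsub (a s') (a u') j)) <= vsum d (fun j => Rabs (a s' j)) + vsum d (fun j => Rabs (a u' j))).
       { rewrite <- vsum_plus. apply vsum_le. intros. unfold vsub. unfold Rminus. eapply Rle_trans. apply Rabs_triang. rewrite Rabs_Ropp; lra. }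
       pose proof (Ca_bound s' Hs'). pose proof (Ca_bound u' Hun). lra. }
     specialize (Hden s' u' Hs' Hu'). apply abs_le_inv in Habs. assert (eta * vsum d (fun j => Rabs (vsub (a s') (a u') j)) <= eta * (2 * Ca)) by (apply Rmult_le_compat_l; lra). unfold Nb. lra. }
   assert (/ norm d r <= norm d (vsub xs x) / (al - dl / 2)).
   { apply Rmult_le_reg_r with (al - dl / 2). lra. unfold Rdiv. rewrite Rmult_assoc, Rinv_l, Rmult_1_r by lra.
     apply Rmult_le_reg_l with (norm d r). auto. rewrite <- Rmult_assoc, Rinv_r, Rmult_1_l by lra. lra. }
   unfold B0. assert (0 <= / norm d r) by (left; apply Rinv_0_lt_compat; auto).
   eapply Rle_trans. apply Rmult_le_compat_l; [auto| apply Hdr].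
   replace (Nb * norm d (vsub xs x) / (al - dl / 2)) with (Nb * (norm d (vsub xs x) / (al - dl / 2))) by (unfold Rdiv; ring).
   rewrite Rmult_comm. apply Rmult_le_compat_l; auto.
 - exists w, dl. split; [|split; [split; lra|split; [lra|]]].
   + exists F. split. exists y. intros z. unfold F. tauto. split. exists x; auto.
     exists x, r. repeat (split; auto).
   + unfold B0 in HwB. apply Rmult_le_compat_r with (r := al - dl / 2) in HwB; [|lra].
     replace (Nb * norm d (vsub xs x) / (al - dl / 2) * (al - dl / 2)) with (Nb * norm d (vsub xs x)) in HwB by (field; lra).
     auto.
Qed.

Lemma geo_final : forall pw, is_glb (PWidth_set d n a) pw ->
  0 <= pw /\ pw * dot d q (vsub xs x) <= den * norm d (vsub xs x).
Proof. intros pw [Hlb Hglb].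
 assert (Hpw0 : 0 <= pw) by (apply Hglb; intros; apply (pwidth_nonneg d n a); auto).
 split; auto. set (al := dot d q (vsub xs x)). set (ne := norm d (vsub xs x)). fold al in Hal.
 assert (Hne : 0 <= ne) by apply norm_pos.
 assert (HCa : 0 <= Ca) by (apply vsum_nonneg; intros; apply vsum_nonneg; intros; apply Rabs_pos).
 destruct (Rle_lt_dec (pw * al) (den * ne)); auto. exfalso.
 set (gap := pw * al - den * ne). set (Z := pw + 4 * Ca * ne + 1).
 assert (HZ : 0 < Z) by (unfold Z; nra).
 set (eta := Rmin 1 (gap / (2 * Z))).
 assert (Heta : 0 < eta) by (apply Rmin_pos; [lra| apply Rdiv_lt_0_compat; unfold gap; lra]).
 assert (Heta2 : eta <= gap / (2 * Z)) by apply Rmin_r.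
 assert (HetaZ : eta * Z <= gap / 2). { apply Rmult_le_compat_r with (r := Z) in Heta2; [|lra].
   replace (gap / (2 * Z) * Z) with (gap / 2) in Heta2 by (field; lra). auto. }
 destruct (geo_step eta Heta) as [w [dl [Hw [[Hdl1 Hdl2] [Hdl3 Hb]]]]]. fold al ne in Hdl3, Hb.
 specialize (Hlb w Hw).
 assert (pw * (al - dl / 2) <= w * (al - dl / 2)) by (apply Rmult_le_compat_r; lra).
 assert (pw * dl <= pw * eta) by (apply Rmult_le_compat_l; lra).
 assert (eta * (Ca * ne) >= 0) by (apply Rle_ge; apply Rmult_le_pos; [lra| apply Rmult_le_pos; lra]).
 unfold Z in HetaZ. unfold gap in *. nra. Qed.
End GeoMain.

Lemma g_loc : forall m g gr t z, has_grad m g gr t -> veq m z t -> g z = g t.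
Proof. intros. destruct (H 1) as [dl [Hdl Hd]]; [lra|].
 assert (Hz : norm m (vsub z t) = 0).
 { unfold norm, dot, vsub. rewrite vsum_zero. apply sqrt_0. intros; rewrite H0; auto; ring. }
 specialize (Hd z ltac:(lra)). rewrite Hz in Hd.
 assert (dot m gr (vsub z t) = 0) by (unfold dot, vsub; apply vsum_zero; intros; rewrite H0; auto; ring).
 rewrite H1 in Hd. apply abs_le_inv in Hd. lra. Qed.

Theorem mainTheorem11
  (d n m p : nat) (a : nat -> Vec)
  (* A is a finite nonempty set of n distinct points of R^d *)
  (Hn : (0 < n)%nat)
  (Hdist : forall i j, (i < n)%nat -> (j < n)%nat -> i <> j -> ~ veq d (a i) (a j))
  (* D = conv(A) = {x : Bx <= c} *)
  (B : Mat) (c : Vec)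
  (HD : forall x, in_conv d n a x <-> forall i, (i < p)%nat -> matvec d B x i <= c i)
  (* f(x) = g(Ax) + <b,x> *)
  (A : Mat) (b : Vec) (g : Vec -> R)
  (* g is C^1 on an open set U containing A D, with gradient dg *)
  (U : Vec -> Prop) (dg : Vec -> Vec)
  (HUo : is_open_in m U)
  (HUD : forall x, in_conv d n a x -> U (matvec d A x))
  (Hdg : forall y, U y -> has_grad m g (dg y) y)
  (Hdgc : forall y, U y -> forall eps, 0 < eps -> exists delta, 0 < delta /\
            forall z, U z -> norm m (vsub z y) < delta -> norm m (vsub (dg z) (dg y)) < eps)
  (* g is mu_g-strongly convex on A D *)
  (mu_g : R) (Hmug : 0 < mu_g)
  (Hsc : forall x1 x2, in_conv d n a x1 -> in_conv d n a x2 -> forall t, 0 <= t <= 1 ->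
          g (vadd (vscale t (matvec d A x1)) (vscale (1 - t) (matvec d A x2)))
          <= t * g (matvec d A x1) + (1 - t) * g (matvec d A x2)
             - mu_g / 2 * t * (1 - t) * (norm m (vsub (matvec d A x1) (matvec d A x2))) ^ 2)
  (* gradient of f on D *)
  (df : Vec -> Vec)
  (Hdf : forall x, in_conv d n a x ->
          has_grad d (fun z => g (matvec d A z) + dot d b z) (df x) x)
  (* G, M, M_A *)
  (G M MA : R)
  (HG : is_max (fun u => exists x, in_conv d n a x /\ u = norm m (dg (matvec d A x))) G)
  (HM : is_lub (fun u => exists x y, in_conv d n a x /\ in_conv d n a y /\
                  u = norm d (vsub x y)) M)
  (HMA : is_lub (fun u => exists x y, in_conv d n a x /\ in_conv d n a y /\
                  u = norm m (vsub (matvec d A x) (matvec d A y))) MA)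
  (* theta is a Hoffman constant *)
  (theta : R) (Htheta : 0 < theta)
  (Hhoff : forall (t : Vec) (s : R),
     let P := fun y => veq m (matvec d A y) t /\ dot d b y = s /\
                        forall i, (i < p)%nat -> matvec d B y i <= c i in
     (exists y, P y) ->
     forall x, (forall i, (i < p)%nat -> matvec d B x i <= c i) ->
     forall eps, 0 < eps -> exists y, P y /\
       norm d (vsub x y) <= theta * sqrt ((norm m (vsub (matvec d A x) t)) ^ 2
                                            + (dot d b x - s) ^ 2) + eps)
  (* PWidth(A) *)
  (pw : R) (Hpw : is_glb (PWidth_set d n a) pw) :
  let f := fun z => g (matvec d A z) + dot d b z in
  let inD := in_conv d n a in
  let Xstar := fun x => inD x /\ forall y, inD y -> f x <= f y in
  let mu := 1 / (2 * theta ^ 2 * (norm d b * M + 3 * G * MA + 2 / mu_g * (G ^ 2 + 1))) in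
  (* tilde mu_f >= mu * PWidth(A)^2, with inf/sup unfolded *)
  forall x, inD x -> ~ Xstar x ->
  forall s v,
    (* s_f(x) = a s *)
    ((s < n)%nat /\ forall i, (i < n)%nat -> dot d (df x) (a s) <= dot d (df x) (a i)) ->
    (* v_f(x) = a v *)
    (exists S, in_Sx d n a (fun i => (i < n)%nat) x S /\ S v /\
       (forall u, S u -> dot d (df x) (a u) <= dot d (df x) (a v)) /\
       forall S' v', in_Sx d n a (fun i => (i < n)%nat) x S' -> S' v' ->
         (forall u, S' u -> dot d (df x) (a u) <= dot d (df x) (a v')) ->
         dot d (df x) (a v) <= dot d (df x) (a v')) ->
    sup_ge (fun y => exists xs, Xstar xs /\ dot d (df x) (vsub xs x) < 0 /\
              let gam := (- dot d (df x) (vsub xs x)) /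
                         (- dot d (df x) (vsub (a s) (a v))) in
              y = 1 / (2 * gam ^ 2) * (f xs - f x - 2 * dot d (df x) (vsub xs x)))
           (mu * pw ^ 2).

Proof.
 intros f inD0 Xstar mu x Hx Hnx s v [Hs Hsmin] [S0 [HS0 [HSv [HSmax HSmin]]]].
 destruct (ff_min_exists d n a A b g df Hn Hdf) as [x1 [Hx1 Hopt]].
 assert (Hfx : forall z, f z = ff d A b g z) by reflexivity.
 assert (Hu : f x1 < f x).
 { apply NNPP; intro Hc. apply Hnx. split; auto. intros y Hy. specialize (Hopt y Hy). rewrite <- (Hfx y), <- (Hfx x1) in Hopt. apply Rnot_lt_le in Hc. lra. }
 set (u := f x - f x1).
 set (kap := norm d b * M + 3 * G * MA + 2 / mu_g * (G ^ 2 + 1)).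
 pose proof (quad_growth d n m a A b g U dg mu_g G M MA HUD Hdg Hmug Hsc HG HM HMA x x1 Hx Hx1 Hopt) as Hqg.
 cbv zeta in Hqg. fold kap in Hqg.
 assert (HG0 : 0 <= G) by (destruct HG as [[z [_ ->]] _]; apply norm_pos).
 assert (HM0 : 0 <= M).
 { destruct HM as [Hub _]. apply Hub. exists (a 0%nat), (a 0%nat). split. apply conv_vertex; auto. split. apply conv_vertex; auto.
   unfold norm, dot, vsub. rewrite vsum_zero. symmetry; apply sqrt_0. intros; ring. }
 assert (HMA0 : 0 <= MA).
 { destruct HMA as [Hub _]. apply Hub. exists (a 0%nat), (a 0%nat). split. apply conv_vertex; auto. split. apply conv_vertex; auto.
   unfold norm, dot, vsub. rewrite vsum_zero. symmetry; apply sqrt_0. intros; ring. }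
 assert (Hkap : 0 < kap).
 { unfold kap. assert (0 < 2 / mu_g * (G ^ 2 + 1)). apply Rmult_lt_0_compat. apply Rdiv_lt_0_compat; lra. nra.
   pose proof (norm_pos d b). nra. }
 assert (Hu0 : 0 < u) by (unfold u; lra).
 set (t1 := matvec d A x1). set (s1 := dot d b x1).
 assert (Hxp : forall i, (i < p)%nat -> matvec d B x i <= c i) by (apply HD; auto).
 assert (Hne : exists y, veq m (matvec d A y) t1 /\ dot d b y = s1 /\ forall i, (i < p)%nat -> matvec d B y i <= c i).
 { exists x1. split. intros i Hi; auto. split; auto. apply HD; auto. }
 assert (Hsq : sqrt (norm m (vsub (matvec d A x) t1) ^ 2 + (dot d b x - s1) ^ 2) <= sqrt (kap * u)).
 { apply sqrt_le_1_alt. unfold s1. rewrite <- dot_sub_r. unfold u. rewrite (Hfx x), (Hfx x1). unfold t1. lra. }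
 assert (Hkey : forall eps, 0 < eps -> exists xs, Xstar xs /\ dot d (df x) (vsub xs x) < 0 /\
    - dot d (df x) (vsub xs x) >= u /\ 0 < norm d (vsub xs x) /\ norm d (vsub xs x) <= theta * sqrt (kap * u) + eps /\
    dot d (df x) (a v) - dot d (df x) (a s) >= - dot d (df x) (vsub xs x) /\
    pw * (- dot d (df x) (vsub xs x)) <= (dot d (df x) (a v) - dot d (df x) (a s)) * norm d (vsub xs x) /\ 0 <= pw /\
    f xs = f x1).
 { intros eps Heps. destruct (Hhoff t1 s1 Hne x Hxp eps Heps) as [xs [[Hxs1 [Hxs2 Hxs3]] Hxs4]].
   assert (Hxs : inD0 xs) by (apply HD; auto).
   assert (Hfxs : f xs = f x1).
   { rewrite (Hfx xs), (Hfx x1). unfold ff. rewrite Hxs2. unfold s1. f_equal. apply (g_loc m g (dg t1)). apply Hdg. apply HUD; auto. auto. }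
   assert (HXs : Xstar xs) by (split; auto; intros y Hy; rewrite Hfxs; specialize (Hopt y Hy); rewrite !Hfx; auto).
   pose proof (grad_ineq d n m a A b g mu_g df Hmug Hsc Hdf x xs Hx Hxs) as Hgi. rewrite <- (Hfx xs), <- (Hfx x) in Hgi.
   assert (Hnorm : norm d (vsub xs x) = norm d (vsub x xs)).
   { replace (vsub xs x) with (vscale (-1) (vsub x xs)). rewrite norm_scale. replace (Rabs (-1)) with 1. ring. rewrite Rabs_left by lra. ring.
     apply functional_extensionality; intro; unfold vscale, vsub; ring. }
   set (al := - dot d (df x) (vsub xs x)).
   assert (Hal : al >= u) by (unfold al, u; lra).
   assert (Hden : dot d (df x) (a v) - dot d (df x) (a s) >= al).
   { assert (dot d (df x) (a s) <= dot d (df x) xs) by (apply (conv_ge d n a); auto).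
     assert (dot d (df x) x <= dot d (df x) (a v)).
     { destruct HS0 as [HSi [lam [Hl1 [Hl2 [Hl3 Hl4]]]]].
       rewrite (dot_veq_r d x (comb n a lam)) by auto. rewrite dot_comb.
       replace (dot d (df x) (a v)) with (vsum n (fun i => lam i * dot d (df x) (a v))) by (rewrite vsum_scalr, Hl3; ring).
       apply vsum_le. intros i Hi. destruct (classic (S0 i)) as [HSi0|HSi0]. specialize (HSmax i HSi0). specialize (Hl1 i Hi HSi0). nra.
       rewrite Hl2; auto; lra. }
     unfold al. rewrite dot_sub_r. lra. }
   assert (HalP : 0 < dot d (vscale (-1) (df x)) (vsub xs x)) by (rewrite dot_scale_l; fold al; lra).
   assert (HdenP : forall s' u', (s' < n)%nat -> S0 u' -> dot d (vscale (-1) (df x)) (vsub (a s') (a u')) <= dot d (df x) (a v) - dot d (df x) (a s)).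
   { intros s' u' Hs' Hu'. rewrite dot_scale_l, dot_sub_r. specialize (Hsmin s' Hs'). specialize (HSmax u' Hu'). lra. }
   destruct (geo_final d n a x (vscale (-1) (df x)) xs S0 _ Hx Hxs HalP HS0 HdenP pw Hpw) as [Hpw0 Hpw1].
   rewrite dot_scale_l in Hpw1. replace (-1 * dot d (df x) (vsub xs x)) with al in Hpw1 by (unfold al; ring).
     exists xs. assert (0 < norm d (vsub xs x)).
     { destruct (Rle_lt_dec (norm d (vsub xs x)) 0) as [Hle0|]; auto. pose proof (cauchy_schwarz d (df x) (vsub xs x)) as Hdn.
       pose proof (norm_pos d (df x)). pose proof (norm_pos d (vsub xs x)). assert (Hz0 : norm d (vsub xs x) = 0) by lra.
       rewrite Hz0, Rmult_0_r in Hdn. apply abs_le_inv in Hdn. unfold al in Hal. lra. }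
     split; [exact HXs|]. split; [unfold al in Hal; lra|]. split; [fold al; lra|]. split; [auto|].
     split. rewrite Hnorm. eapply Rle_trans. apply Hxs4. apply Rplus_le_compat_r. apply Rmult_le_compat_l; [lra| auto].
     split; [fold al; lra|]. split; [fold al; lra|]. split; auto.
 }
 intros c' Hc'.
 set (den := dot d (df x) (a v) - dot d (df x) (a s)).
 assert (Hmain : exists eps, 0 < eps /\ forall ne, 0 < ne -> ne <= theta * sqrt (kap * u) + eps -> (c' <= 0 \/ 2 * c' * ne ^ 2 < pw ^ 2 * u)).
 { destruct (Rle_lt_dec c' 0) as [Hc0|Hc0]. exists 1. split. lra. intros; left; auto.
   set (Z := theta * sqrt (kap * u)).
   assert (HZ : 0 < Z) by (unfold Z; apply Rmult_lt_0_compat; auto; apply sqrt_lt_R0; nra).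
   assert (HZ2 : Z ^ 2 = theta ^ 2 * (kap * u)) by (unfold Z; rewrite Rpow_mult_distr, pow2_sqrt; auto; nra).
   set (Q := pw ^ 2 * u / (2 * c')).
   assert (HQ : Z ^ 2 < Q).
   { unfold mu in Hc'. fold kap in Hc'. assert (Hth : 0 < theta ^ 2) by (apply pow_lt; auto).
     assert (Hden0 : 0 < 2 * theta ^ 2 * kap) by nra.
     assert (c' * (2 * theta ^ 2 * kap) < pw ^ 2).
     { apply Rmult_lt_compat_r with (r := 2 * theta ^ 2 * kap) in Hc'; auto.
       replace (1 / (2 * theta ^ 2 * kap) * pw ^ 2 * (2 * theta ^ 2 * kap)) with (pw ^ 2) in Hc' by (field; lra). auto. }
     unfold Q. rewrite HZ2. apply Rmult_lt_reg_r with (2 * c'). lra.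
     replace (pw ^ 2 * u / (2 * c') * (2 * c')) with (pw ^ 2 * u) by (field; lra). nra. }
   assert (HsQ : Z < sqrt Q).
   { rewrite <- (sqrt_pow2 Z) by lra. apply sqrt_lt_1_alt. split; auto. apply pow2_ge_0. }
   exists ((sqrt Q - Z) / 2). split. lra. intros ne Hne1 Hle. right.
   assert (ne < sqrt Q) by lra.
   assert (ne ^ 2 < Q). { rewrite <- (pow2_sqrt Q) by (pose proof (pow2_ge_0 Z); lra). nra. }
   assert (2 * c' * Q = pw ^ 2 * u) by (unfold Q; field; lra). nra. }
 destruct Hmain as [eps [Heps Hcond]].
 destruct (Hkey eps Heps) as [xs [HXs [Hneg [Hal [Hne0 [HneB [Hden [Hpwb [Hpw0 Hfxs]]]]]]]]].
 fold den in Hden, Hpwb.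
 set (al := - dot d (df x) (vsub xs x)) in *.
 set (ne := norm d (vsub xs x)) in *.
 assert (Hdenv : - dot d (df x) (vsub (a s) (a v)) = den) by (rewrite dot_sub_r; unfold den; ring).
 assert (Hval : f xs - f x - 2 * dot d (df x) (vsub xs x) = 2 * al - u) by (unfold u, al; rewrite Hfxs; ring).
 assert (Hal0 : 0 < al) by lra.
 assert (Hden1 : 0 < den) by lra.
 exists (den ^ 2 * (2 * al - u) / (2 * al ^ 2)). split.
 - exists xs. split; auto. split; auto. cbv zeta. rewrite Hdenv, Hval. fold al. field. lra.
 - destruct (Hcond ne Hne0 HneB) as [Hc0|Hc1].
   + assert (0 < den ^ 2 * (2 * al - u) / (2 * al ^ 2)). apply Rdiv_lt_0_compat. apply Rmult_lt_0_compat. nra. lra. nra. lra.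
   + assert (Hpa : pw ^ 2 * al ^ 2 <= den ^ 2 * ne ^ 2).
     { assert (0 <= pw * al) by nra. replace (pw ^ 2 * al ^ 2) with ((pw * al) * (pw * al)) by ring.
       replace (den ^ 2 * ne ^ 2) with ((den * ne) * (den * ne)) by ring. apply Rmult_le_compat; lra. }
     assert (Hne2 : 0 < ne ^ 2) by nra.
     assert (2 * c' * al ^ 2 * ne ^ 2 < den ^ 2 * ne ^ 2 * (2 * al - u)).
     { assert (2 * c' * ne ^ 2 * al ^ 2 < pw ^ 2 * u * al ^ 2) by (apply Rmult_lt_compat_r; nra).
       assert (pw ^ 2 * al ^ 2 * u <= den ^ 2 * ne ^ 2 * u) by (apply Rmult_le_compat_r; lra).
       assert (den ^ 2 * ne ^ 2 * u <= den ^ 2 * ne ^ 2 * (2 * al - u)) by (apply Rmult_le_compat_l; nra).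
       nra. }
     assert (2 * c' * al ^ 2 < den ^ 2 * (2 * al - u)).
     { apply Rmult_lt_reg_r with (ne ^ 2); auto. nra. }
     apply Rmult_lt_reg_r with (2 * al ^ 2). nra.
     replace (den ^ 2 * (2 * al - u) / (2 * al ^ 2) * (2 * al ^ 2)) with (den ^ 2 * (2 * al - u)) by (field; lra). nra.
Qed.
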